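(* For every $k\in\mathbb{N}$, the limit $\tau_k^*:=\lim_{n\to\infty}\tau_{n,k}$ exists and $$\tau_k^*=\Gamma(\nu+1)\Big(\frac{j_{\nu+1,1}}{2}\Big)^{-\nu}\,|J_\nu(j_{\nu+1,1})|,\qquad \nu=k-\tfrac12,$$ where $J_\nu$ is the Bessel function of the first kind of order $\nu$ and $j_{\nu+1,1}$ is the first positive zero of $J_{\nu+1}$.
   Context: $T_n$ denotes the Chebyshev polynomial of the first kind of degree $n$, $T_n(\cos\theta)=\cos n\theta$. For integers $n\ge k+2$, $k\ge 1$, let $\omega_{n,k}$ be the rightmost (largest) zero of $T_n^{(k+1)}$ and define $\tau_{n,k}:=|T_n^{(k)}(\omega_{n,k})|/T_n^{(k)}(1)$. *)

(* Defs.v *)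
From Stdlib Require Import Reals Arith Factorial.
From Coquelicot Require Import Coquelicot.
Open Scope R_scope.

(* Chebyshev polynomials of the first kind, as real functions:
   T_0 = 1, T_1 = x, T_{n+2} = 2 x T_{n+1} - T_n  (so T_n(cos t) = cos (n t)). *)
Fixpoint cheb_pair (n : nat) (x : R) : R * R :=
  match n with
  | O => (1, x)
  | S m => let (a, b) := cheb_pair m x in (b, 2 * x * b - a)
  end.
Definition ChebT (n : nat) (x : R) : R := fst (cheb_pair n x).

(* omega_{n,k} : the largest zero of T_n^{(k+1)} (supremum of its finite zero set). *)
Definition cheb_omega (n k : nat) : R :=
  real (Lub_Rbar (fun x => Derive_n (ChebT n) (S k) x = 0)).

Definition cheb_tau (n k : nat) : R :=
  Rabs (Derive_n (ChebT n) k (cheb_omega n k)) / Derive_n (ChebT n) k 1.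

Definition Gamma (x : R) : R :=
  RInt_gen (fun t => Rpower t (x - 1) * exp (- t)) (at_right 0) (Rbar_locally p_infty).

Definition BesselJ (nu x : R) : R :=
  Series (fun m => (-1) ^ m / (INR (Factorial.fact m) * Gamma (INR m + nu + 1))
                   * Rpower (x / 2) (2 * INR m + nu)).

Definition first_pos_zero (f : R -> R) (j : R) : Prop :=
  0 < j /\ f j = 0 /\ (forall x, 0 < x < j -> f x <> 0).

(* Main.v *)
Require Import Defs.
From Stdlib Require Import Reals Lra Lia Arith Classical.
From Coquelicot Require Import Coquelicot.
Open Scope R_scope.

Lemma mvt_le (f df : R -> R) a b K : a <= b ->
  (forall x, a <= x <= b -> is_derive f x (df x)) ->
  (forall x, a < x < b -> df x <= K) -> f b - f a <= K * (b - a).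
Proof.
  intros Hab Hd Hk. destruct (Req_dec a b) as [->|Hne]. { ring_simplify. lra. }
  assert (H : a < b) by lra.
  destruct (MVT_cor2 f df a b H) as [c [Hc1 Hc2]].
  { intros c0 Hc0. apply is_derive_Reals. auto. }
  rewrite Hc1. apply Rmult_le_compat_r; [lra| apply Hk; lra].
Qed.

Lemma mvt_ge (f df : R -> R) a b K : a <= b ->
  (forall x, a <= x <= b -> is_derive f x (df x)) ->
  (forall x, a < x < b -> K <= df x) -> K * (b - a) <= f b - f a.
Proof.
  intros Hab Hd Hk. destruct (Req_dec a b) as [->|Hne]. { ring_simplify. lra. }
  assert (H : a < b) by lra.
  destruct (MVT_cor2 f df a b H) as [c [Hc1 Hc2]].
  { intros c0 Hc0. apply is_derive_Reals. auto. }
  rewrite Hc1. apply Rmult_le_compat_r; [lra| apply Hk; lra].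
Qed.

Lemma mvt_lt (f df : R -> R) a b K : a < b ->
  (forall x, a <= x <= b -> is_derive f x (df x)) ->
  (forall x, a < x < b -> df x < K) -> f b - f a < K * (b - a).
Proof.
  intros H Hd Hk.
  destruct (MVT_cor2 f df a b H) as [c [Hc1 Hc2]].
  { intros c0 Hc0. apply is_derive_Reals. auto. }
  rewrite Hc1. apply Rmult_lt_compat_r; [lra| apply Hk; lra].
Qed.

Lemma lub_all_p_infty (E : R -> Prop) l : is_lub_Rbar E l -> (forall r, E r) -> l = p_infty.
Proof.
  intros [Hub _] HE. destruct l as [r| |].
  - specialize (Hub (r+1) (HE _)). simpl in Hub. lra.
  - reflexivity.
  - specialize (Hub 0 (HE _)). simpl in Hub. contradiction.
Qed.

Lemma CV_radius_inf_of (a : nat -> R) :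
  (forall r, exists M, forall n, Rabs (a n * r ^ n) <= M) -> CV_radius a = p_infty.
Proof. intros H. apply (lub_all_p_infty _ _ (CV_radius_bounded a)). exact H. Qed.

Lemma sum_mono (u : nat -> R) K n : (forall m, 0 <= u m) -> (K <= n)%nat ->
  sum_f_R0 u K <= sum_f_R0 u n.
Proof.
  intros Hu Hn. induction Hn. lra. simpl. specialize (Hu (S m)). lra.
Qed.

Lemma term_le_sum (u : nat -> R) N n : (forall m, 0 <= u m) -> (n <= N)%nat -> u n <= sum_f_R0 u N.
Proof.
  intros Hu Hn. apply Rle_trans with (sum_f_R0 u n).
  - destruct n. simpl; lra. simpl. pose proof (cond_pos_sum u n Hu). lra.
  - apply sum_mono; auto.
Qed.

Lemma CV_radius_finsupp (a : nat -> R) N : (forall m, (N < m)%nat -> a m = 0) -> CV_radius a = p_infty.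
Proof.
  intros Ha. apply CV_radius_inf_of. intros r.
  exists (sum_f_R0 (fun m => Rabs (a m * r^m)) N). intros n.
  destruct (le_lt_dec n N).
  - apply (term_le_sum (fun m => Rabs (a m * r^m))); auto. intros; apply Rabs_pos.
  - rewrite Ha by auto. rewrite Rmult_0_l, Rabs_R0. apply cond_pos_sum. intros; apply Rabs_pos.
Qed.

Lemma is_series_lim (u : nat -> R) (l : R) : is_series u l -> is_lim_seq (fun N => sum_f_R0 u N) l.
Proof. intros H. apply (is_lim_seq_ext (sum_n u)). intros; apply sum_n_Reals. exact H. Qed.

Lemma lim_is_series (u : nat -> R) (l : R) : is_lim_seq (fun N => sum_f_R0 u N) l -> is_series u l.
Proof. intros H. apply (is_lim_seq_ext (fun N => sum_f_R0 u N) (sum_n u)) in H.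
  exact H. intros; symmetry; apply sum_n_Reals. Qed.

Lemma sum_const_after (u : nat -> R) N n : (forall m, (N < m)%nat -> u m = 0) -> (N <= n)%nat ->
  sum_f_R0 u n = sum_f_R0 u N.
Proof. intros Hu Hn. induction Hn. reflexivity. simpl. rewrite IHHn, Hu. ring. lia. Qed.

Lemma Series_finsupp (u : nat -> R) N : (forall m, (N < m)%nat -> u m = 0) -> Series u = sum_f_R0 u N.
Proof.
  intros Hu. apply is_series_unique. apply lim_is_series.
  apply (is_lim_seq_ext_loc (fun _ => sum_f_R0 u N)).
  exists N. intros n Hn. symmetry. apply sum_const_after; auto.
  apply is_lim_seq_const.
Qed.

Lemma ex_series_finsupp (u : nat -> R) N : (forall m, (N < m)%nat -> u m = 0) -> ex_series u.
Proof.
  intros Hu. exists (sum_f_R0 u N). apply lim_is_series.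
  apply (is_lim_seq_ext_loc (fun _ => sum_f_R0 u N)).
  exists N. intros n Hn. symmetry. apply sum_const_after; auto.
  apply is_lim_seq_const.
Qed.

Lemma partial_le_lim (v : nat -> R) (L : R) K : (forall m, 0 <= v m) ->
  is_lim_seq (fun N => sum_f_R0 v N) L -> sum_f_R0 v K <= L.
Proof.
  intros Hv HL.
  assert (H := is_lim_seq_le_loc (fun _ => sum_f_R0 v K) (fun N => sum_f_R0 v N) (sum_f_R0 v K) L).
  apply H; [|apply is_lim_seq_const|exact HL].
  exists K; intros n Hn; apply sum_mono; auto.
Qed.

Lemma tail_small (v : nat -> R) : (forall m, 0 <= v m) -> ex_series v ->
  forall eps, 0 < eps -> exists M, forall K, (M <= K)%nat -> sum_f_R0 v K - sum_f_R0 v M <= eps.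
Proof.
  intros Hv [L HL] eps Heps. apply is_series_lim in HL.
  pose proof HL as HL'. apply is_lim_seq_spec in HL'.
  destruct (HL' (mkposreal eps Heps)) as [M HM].
  exists M. intros K HK. specialize (HM M (le_n _)). simpl in HM.
  pose proof (partial_le_lim v L K Hv HL). apply Rabs_lt_between in HM. lra.
Qed.

Lemma lim_sum_zero (w : nat -> nat -> R) M : (forall m, is_lim_seq (fun n => w n m) 0) ->
  is_lim_seq (fun n => sum_f_R0 (w n) M) 0.
Proof.
  intros Hw. induction M; simpl. apply Hw.
  replace (Finite 0) with (Finite (0 + 0)) by (f_equal; ring).
  apply is_lim_seq_plus'; auto.
Qed.

Lemma pow_abs_le (s S : R) m : Rabs s <= S -> Rabs (s ^ m) <= S ^ m.
Proof.
  intros H. rewrite <- RPow_abs. apply pow_incr. split. apply Rabs_pos. exact H.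
Qed.

Lemma sum_scal_l (u : nat -> R) c N : sum_f_R0 (fun i => c * u i) N = c * sum_f_R0 u N.
Proof. induction N; simpl; [|rewrite IHN]; ring. Qed.

Lemma tannery (a : nat -> nat -> R) (l A : nat -> R) (Sr : R) :
  0 <= Sr -> (forall m, is_lim_seq (fun n => a n m) (l m)) ->
  (forall n m, Rabs (a n m) <= A m) -> ex_series (fun m => A m * Sr ^ m) ->
  forall eps, 0 < eps -> exists N, forall n, (N <= n)%nat -> forall s, Rabs s <= Sr ->
    Rabs (PSeries (a n) s - PSeries l s) <= eps.
Proof.
  intros HS Hlim HA Hser eps Heps.
  assert (HlA : forall m, Rabs (l m) <= A m).
  { intros m. assert (H := is_lim_seq_le _ _ _ _ (fun n => HA n m) (is_lim_seq_abs _ _ (Hlim m)) (is_lim_seq_const (A m))).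
    exact H. }
  assert (HA0 : forall m, 0 <= A m). { intros m. eapply Rle_trans. apply Rabs_pos. apply (HlA m). }
  assert (Hv0 : forall m, 0 <= A m * Sr ^ m). { intros m. apply Rmult_le_pos; auto. apply pow_le; auto. }
  destruct (tail_small _ Hv0 Hser (eps/4)) as [M HM]. lra.
  set (w := fun n m => Rabs (a n m - l m) * Sr ^ m).
  assert (Hw : is_lim_seq (fun n => sum_f_R0 (w n) M) 0).
  { apply lim_sum_zero. intros m. unfold w.
    replace (Finite 0) with (Rbar_mult (Rbar_abs (l m - l m)) (Sr ^ m)).
    apply is_lim_seq_scal_r. apply is_lim_seq_abs. apply is_lim_seq_minus'. apply Hlim. apply is_lim_seq_const.
    simpl. f_equal. rewrite Rminus_diag, Rabs_R0. ring. }
  apply is_lim_seq_spec in Hw. destruct (Hw (mkposreal (eps/2) ltac:(lra))) as [N HN].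
  exists N. intros n Hn s Hs. specialize (HN n Hn). simpl in HN. rewrite Rminus_0_r in HN.
  rewrite Rabs_pos_eq in HN by (apply cond_pos_sum; intros; unfold w; apply Rmult_le_pos; [apply Rabs_pos| apply pow_le; auto]).
  assert (Hex : forall b : nat -> R, (forall m, Rabs (b m) <= A m) -> is_lim_seq (fun K => sum_f_R0 (fun m => b m * s ^ m) K) (PSeries b s)).
  { intros b Hb. apply is_series_lim. apply Series_correct.
    apply ex_series_Rabs. apply (@ex_series_le R_AbsRing R_CompleteNormedModule _ (fun m => A m * Sr ^ m)); auto.
    intros m. unfold norm; simpl. unfold abs; simpl. rewrite Rabs_Rabsolu, Rabs_mult.
    apply Rmult_le_compat; auto using Rabs_pos, pow_abs_le. }
  assert (HD := is_lim_seq_abs _ _ (is_lim_seq_minus' _ _ _ _ (Hex _ (HA n)) (Hex _ HlA))).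
  refine (is_lim_seq_le_loc _ (fun _ => eps) _ eps _ HD (is_lim_seq_const _)).
  exists (S M). intros K HK.
  rewrite <- minus_sum.
  eapply Rle_trans. apply sum_f_R0_triangle.
  rewrite (tech2 _ M K) by lia.
  specialize (HM K ltac:(lia)).
  rewrite (tech2 _ M K) in HM; [|lia].
  apply Rle_trans with (sum_f_R0 (w n) M + 2 * (eps/4)); [|lra].
  apply Rplus_le_compat.
  - apply sum_Rle. intros m _. unfold w. rewrite <- Rmult_minus_distr_r, Rabs_mult.
    apply Rmult_le_compat_l. apply Rabs_pos. apply pow_abs_le; auto.
  - apply Rle_trans with (2 * sum_f_R0 (fun i => A (S M + i)%nat * Sr ^ (S M + i)) (K - S M)); [|lra].
    rewrite <- sum_scal_l.
    apply sum_Rle. intros i _. rewrite <- Rmult_minus_distr_r, Rabs_mult.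
    set (m := (S M + i)%nat).
    assert (Hal : Rabs (a n m - l m) <= 2 * A m).
    { unfold Rminus. eapply Rle_trans. apply Rabs_triang. rewrite Rabs_Ropp.
      specialize (HA n m). specialize (HlA m). lra. }
    rewrite <- Rmult_assoc. apply Rmult_le_compat; auto using Rabs_pos, pow_abs_le.
Qed.

Lemma mvt_gt (f df : R -> R) a b K : a < b ->
  (forall x, a <= x <= b -> is_derive f x (df x)) ->
  (forall x, a < x < b -> K < df x) -> K * (b - a) < f b - f a.
Proof.
  intros H Hd Hk.
  destruct (MVT_cor2 f df a b H) as [c [Hc1 Hc2]].
  { intros c0 Hc0. apply is_derive_Reals. auto. }
  rewrite Hc1. apply Rmult_lt_compat_r; [lra| apply Hk; lra].
Qed.

Lemma is_derive_mult_R (f g : R -> R) x df dg : is_derive f x df -> is_derive g x dg ->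
  is_derive (fun t => f t * g t) x (df * g x + f x * dg).
Proof. intros Hf Hg. apply (is_derive_mult f g x df dg Hf Hg). intros; apply Rmult_comm. Qed.

Lemma is_derive_pow_id (n : nat) x : is_derive (fun t => t ^ n) x (INR n * x ^ (pred n)).
Proof. assert (H := is_derive_pow (fun t => t) n x 1 (is_derive_id x)). rewrite Rmult_1_r in H. exact H. Qed.

Lemma is_derive_eq (f : R -> R) (x l l' : R) : is_derive f x l -> l = l' -> is_derive f x l'.
Proof. intros H ->. exact H. Qed.

Lemma cont_eps (f : R -> R) x : continuity_pt f x -> forall eps, 0 < eps ->
  exists d, 0 < d /\ forall y, Rabs (y - x) < d -> Rabs (f y - f x) < eps.
Proof.
  intros H eps Heps. destruct (H eps Heps) as [d [Hd H']]. exists d. split; auto.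
  intros y Hy. destruct (Req_dec y x) as [->|Hne]. rewrite Rminus_diag, Rabs_R0; auto.
  apply (H' y). split. split. exact I. auto. exact Hy.
Qed.

Lemma is_derive_ext_R (f g : R -> R) (x l : R) : (forall t : R, f t = g t) -> is_derive f x l -> is_derive g x l.
Proof. intros H Hf. apply (is_derive_ext f g x l H Hf). Qed.

Lemma abs_lt_of (x a d : R) : a - d < x -> x < a + d -> Rabs (x - a) < d.
Proof. intros H1 H2. unfold Rabs. destruct (Rcase_abs (x - a)); lra. Qed.

Lemma ex_series_of_pseries (a : nat -> R) x : ex_pseries a x -> ex_series (fun m => a m * x ^ m).
Proof.
  intros H. apply (ex_series_ext (fun k => scal (pow_n x k) (a k))); auto.
  intros m. rewrite pow_n_pow. unfold scal; simpl. unfold mult; simpl. ring.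
Qed.

Lemma Rabs_def2b (x e : R) : Rabs x <= e -> - e <= x <= e.
Proof. unfold Rabs. destruct (Rcase_abs x); intros; lra. Qed.

Fixpoint fF (b : R) (m : nat) : R :=
  match m with O => 1 | S p => fF b p * (-1) / ((b + INR p) * INR (S p)) end.

Lemma fF_neq0 b m : 1 <= b -> fF b m <> 0.
Proof.
  intros Hb. induction m. simpl. lra.
  change (fF b (S m)) with (fF b m * (-1) / ((b + INR m) * INR (S m))).
  assert (0 < (b + INR m) * INR (S m)).
  { apply Rmult_lt_0_compat. pose proof (pos_INR m); lra. apply lt_0_INR; lia. }
  unfold Rdiv. apply Rmult_integral_contrapositive. split.
  apply Rmult_integral_contrapositive. split; [exact IHm| intro; lra].
  apply Rinv_neq_0_compat. intro; lra.
Qed.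

Lemma lim_inv_S : is_lim_seq (fun n => / INR (S n)) 0.
Proof.
  assert (H := is_lim_seq_inv (fun n => INR (S n)) p_infty).
  simpl in H. apply H. apply (is_lim_seq_incr_1 INR). apply is_lim_seq_INR. discriminate.
Qed.

Lemma CV_fF b : 1 <= b -> CV_radius (fF b) = p_infty.
Proof.
  intros Hb. apply CV_radius_infinite_DAlembert. intros; apply fF_neq0; auto.
  apply (is_lim_seq_le_le (fun _ => 0) _ (fun n => / INR (S n))).
  - intros n. change (fF b (S n)) with (fF b n * (-1) / ((b + INR n) * INR (S n))). pose proof (pos_INR n). pose proof (fF_neq0 b n Hb).
    assert (0 < INR (S n)) by (apply lt_0_INR; lia).
    replace (fF b n * -1 / ((b + INR n) * INR (S n)) / fF b n) with (- / ((b + INR n) * INR (S n))) by (field; lra).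
    rewrite Rabs_Ropp, Rabs_pos_eq.
    split. left. apply Rinv_0_lt_compat. apply Rmult_lt_0_compat; lra.
    apply Rinv_le_contravar. lra. rewrite <- (Rmult_1_l (INR (S n))) at 1. apply Rmult_le_compat_r; try lra.
    left. apply Rinv_0_lt_compat. apply Rmult_lt_0_compat; lra.
  - apply is_lim_seq_const.
  - apply lim_inv_S.
Qed.

Lemma fF_S b m : fF b (S m) = fF b m * (-1) / ((b + INR m) * INR (S m)).
Proof. reflexivity. Qed.

Definition F0 b x := PSeries (fF b) x.
Definition F1 b x := PSeries (PS_derive (fF b)) x.
Definition F2 b x := PSeries (PS_derive (PS_derive (fF b))) x.

Lemma F0_deriv b x : 1 <= b -> is_derive (F0 b) x (F1 b x).
Proof. intros Hb. apply is_derive_PSeries. rewrite CV_fF; auto. exact I. Qed.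

Lemma F1_deriv b x : 1 <= b -> is_derive (F1 b) x (F2 b x).
Proof. intros Hb. apply is_derive_PSeries. rewrite CV_radius_derive, CV_fF; auto. exact I. Qed.

Lemma F0_cont b x : 1 <= b -> continuity_pt (F0 b) x.
Proof. intros Hb. apply PSeries_continuity. rewrite CV_fF; auto. exact I. Qed.

Lemma F1_cont b x : 1 <= b -> continuity_pt (F1 b) x.
Proof. intros Hb. apply PSeries_continuity. rewrite CV_radius_derive, CV_fF; auto. exact I. Qed.

Lemma F2_cont b x : 1 <= b -> continuity_pt (F2 b) x.
Proof. intros Hb. apply PSeries_continuity. rewrite !CV_radius_derive, CV_fF; auto. exact I. Qed.

Lemma F0_at0 b : F0 b 0 = 1.
Proof. unfold F0. rewrite PSeries_0. reflexivity. Qed.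

Lemma F1_at0 b : 1 <= b -> F1 b 0 = - / b.
Proof. intros Hb. unfold F1. rewrite PSeries_0. unfold PS_derive. simpl. field. lra. Qed.

Lemma PSeries_zero x : PSeries (fun _ => 0) x = 0.
Proof.
  unfold PSeries. rewrite (Series_finsupp _ 0). simpl. ring.
  intros; ring.
Qed.

Lemma F_ode b x : 1 <= b -> x * F2 b x + b * F1 b x + F0 b x = 0.
Proof.
  intros Hb.
  assert (Hr : forall a, CV_radius a = p_infty -> ex_pseries a x).
  { intros a Ha. apply CV_radius_inside. rewrite Ha. exact I. }
  assert (R0 := CV_fF b Hb).
  assert (R1 : CV_radius (PS_derive (fF b)) = p_infty) by (rewrite CV_radius_derive; auto).
  assert (R2 : CV_radius (PS_derive (PS_derive (fF b))) = p_infty) by (rewrite CV_radius_derive; auto).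
  unfold F0, F1, F2.
  rewrite <- PSeries_incr_1. rewrite <- PSeries_scal.
  rewrite <- PSeries_plus.
  2: apply Hr; rewrite CV_radius_incr_1; auto.
  2: apply Hr; rewrite CV_radius_scal; auto; lra.
  rewrite <- PSeries_plus.
  2: { apply CV_radius_inside. eapply Rbar_lt_le_trans. 2: apply CV_radius_plus.
       rewrite CV_radius_incr_1, CV_radius_scal, R2, R1; [exact I| lra]. }
  2: apply Hr; auto.
  rewrite <- (PSeries_zero x). apply PSeries_ext. intros n.
  change (PS_plus (PS_plus (PS_incr_1 (PS_derive (PS_derive (fF b)))) (PS_scal b (PS_derive (fF b)))) (fF b) n)
    with ((match n with O => 0 | S p => PS_derive (PS_derive (fF b)) p end) + b * PS_derive (fF b) n + fF b n).
  destruct n as [|p].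
  - unfold PS_derive. rewrite fF_S. simpl. field. lra.
  - unfold PS_derive. rewrite !fF_S.
    assert (0 < b + INR (S p)) by (pose proof (pos_INR (S p)); lra).
    assert (0 < INR (S p)) by (apply lt_0_INR; lia).
    assert (0 < b + INR p) by (pose proof (pos_INR p); lra).
    rewrite (S_INR (S p)).
    field. repeat split; lra.
Qed.

Lemma psi_deriv b k t : 1 <= b -> b = INR k + /2 ->
  is_derive (fun t => t ^ (S k) * F1 b t) t (t ^ k * (F1 b t / 2 - F0 b t)).
Proof.
  intros Hb Hbk. eapply is_derive_eq. apply is_derive_mult_R. apply is_derive_pow_id. apply F1_deriv; auto.
  simpl pred. rewrite S_INR. pose proof (F_ode b t Hb) as E.
  replace (t ^ S k) with (t * t ^ k) by (simpl; ring).
  replace (t * t ^ k * F2 b t) with (t ^ k * (t * F2 b t)) by ring.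
  replace (t * F2 b t) with (- b * F1 b t - F0 b t) by lra.
  rewrite Hbk. field.
Qed.

Lemma F0_decr b a c : 1 <= b -> a < c -> (forall x, a < x < c -> F1 b x < 0) -> F0 b c < F0 b a.
Proof.
  intros Hb Hac H. assert (Hm := mvt_lt (F0 b) (F1 b) a c 0 Hac (fun x _ => F0_deriv b x Hb) H). lra.
Qed.

Lemma F1_neg_all b : 1 <= b -> (forall s, 0 < s -> F1 b s <> 0) -> forall s, 0 <= s -> F1 b s < 0.
Proof.
  intros Hb H s Hs. destruct (Req_dec s 0) as [->|Hne].
  - rewrite F1_at0 by auto. assert (0 < / b) by (apply Rinv_0_lt_compat; lra). lra.
  - destruct (Rtotal_order (F1 b s) 0) as [Hl|[He|Hg]]; auto.
    + exfalso. apply (H s); auto; lra.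
    + exfalso. assert (Hc : continuity (F1 b)) by (intros x; apply F1_cont; auto).
      assert (H0 : F1 b 0 < 0). { rewrite F1_at0 by auto. assert (0 < / b) by (apply Rinv_0_lt_compat; lra). lra. }
      destruct (IVT (F1 b) 0 s Hc ltac:(lra) H0 Hg) as [z [Hz1 Hz2]].
      destruct (Req_dec z 0) as [->|Hz0]. lra.
      apply (H z); auto; lra.
Qed.

Lemma caseB_step b k j : 1 <= b -> 
  (forall s, 0 <= s -> F1 b s < 0) -> (forall s, 0 <= s -> 0 < F0 b s) ->
  (forall s, 0 < s -> F1 b s <= - F0 b s / INR (S k)) ->
  (exists C, 0 < C /\ forall t, 1 <= t -> C / t ^ (S j) <= - F1 b t) ->
  (exists C, 0 < C /\ forall t, 1 <= t -> C / t ^ j <= - F1 b t).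
Proof.
  intros Hb Hneg Hpos Hii [C [HC HCt]].
  assert (HK : 0 < INR (S k)) by (apply lt_0_INR; lia).
  assert (H2 : 0 < 2 ^ (S j)) by (apply pow_lt; lra).
  exists (C / (INR (S k) * 2 ^ (S j))). split.
  { apply Rdiv_lt_0_compat; auto. apply Rmult_lt_0_compat; auto. }
  intros t Ht.
  assert (HA : 0 < t ^ j) by (apply pow_lt; lra).
  assert (Ht2 : (2 * t) ^ (S j) = 2 ^ (S j) * t ^ j * t) by (rewrite Rpow_mult_distr; simpl; ring).
  assert (HB : 0 < (2 * t) ^ (S j)) by (apply pow_lt; lra).
  assert (Hm := mvt_le (F0 b) (F1 b) t (2 * t) (- (C / (2 * t) ^ (S j))) ltac:(lra)
     (fun x _ => F0_deriv b x Hb)).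
  assert (Hm' : F0 b (2 * t) - F0 b t <= - (C / (2 * t) ^ S j) * (2 * t - t)).
  { apply Hm. intros x Hx. specialize (HCt x ltac:(lra)).
    assert (C / (2 * t) ^ S j <= C / x ^ S j).
    { apply Rmult_le_compat_l. lra. apply Rinv_le_contravar. apply pow_lt; lra.
      apply pow_incr. lra. }
    lra. }
  pose proof (Hpos (2 * t) ltac:(lra)).
  assert (HF0 : C / (2 ^ S j * t ^ j) <= F0 b t).
  { replace (C / (2 ^ S j * t ^ j)) with ((C / (2 * t) ^ S j) * (2 * t - t)) by (rewrite Ht2; field; lra).
    lra. }
  specialize (Hii t ltac:(lra)).
  apply Rle_trans with (F0 b t / INR (S k)); [|lra].
  replace (C / (INR (S k) * 2 ^ S j) / t ^ j) with (C / (2 ^ S j * t ^ j) / INR (S k)) by (field; lra).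
  apply Rmult_le_compat_r. left; apply Rinv_0_lt_compat; auto. exact HF0.
Qed.

Lemma caseB_iter b k j : 1 <= b -> 
  (forall s, 0 <= s -> F1 b s < 0) -> (forall s, 0 <= s -> 0 < F0 b s) ->
  (forall s, 0 < s -> F1 b s <= - F0 b s / INR (S k)) ->
  (exists C, 0 < C /\ forall t, 1 <= t -> C / t ^ j <= - F1 b t) ->
  (exists C, 0 < C /\ forall t, 1 <= t -> C / t ^ 0 <= - F1 b t).
Proof.
  intros Hb Hneg Hpos Hii. induction j; auto.
  intros H. apply IHj. apply (caseB_step b k j); auto.
Qed.

Lemma F1_has_zero b k : 1 <= b -> b = INR k + /2 -> exists s, 0 < s /\ F1 b s = 0.
Proof.
  intros Hb Hbk. apply NNPP. intros Hno.
  assert (H : forall s, 0 < s -> F1 b s <> 0).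
  { intros s Hs He. apply Hno. exists s. auto. }
  assert (Hneg := F1_neg_all b Hb H).
  destruct (classic (exists s1, 0 < s1 /\ F0 b s1 < 0)) as [[s1 [Hs1 HF]]|HnA].
  -
    set (c := - F0 b s1).
    assert (Hd : forall x, s1 <= x -> is_derive (fun t => t * F1 b t) x ((1 - b) * F1 b x - F0 b x)).
    { intros x Hx. eapply is_derive_eq. apply is_derive_mult_R. apply is_derive_id. apply F1_deriv; auto.
      pose proof (F_ode b x Hb). change (@one R_AbsRing) with 1. cbv beta. lra. }
    set (T := s1 + (Rabs (s1 * F1 b s1) + 1) / c).
    assert (Hc : 0 < c) by (unfold c; lra).
    assert (HT : s1 < T). { unfold T. assert (0 < (Rabs (s1 * F1 b s1) + 1) / c). apply Rdiv_lt_0_compat; auto.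
      pose proof (Rabs_pos (s1 * F1 b s1)); lra. lra. }
    assert (Hm := mvt_ge (fun t => t * F1 b t) (fun x => (1 - b) * F1 b x - F0 b x) s1 T c ltac:(lra)
      (fun x Hx => Hd x (proj1 Hx))).
    cbv beta in Hm.
    assert (Hm' : c * (T - s1) <= T * F1 b T - s1 * F1 b s1).
    { apply Hm. intros x Hx. pose proof (Hneg x ltac:(lra)).
      assert (F0 b x < F0 b s1) by (apply F0_decr; [auto|lra|intros; apply Hneg; lra]).
      unfold c. nra. }
    replace (c * (T - s1)) with (Rabs (s1 * F1 b s1) + 1) in Hm' by (unfold T; field; lra).
    pose proof (Hneg T ltac:(lra)). pose proof (Hneg s1 ltac:(lra)).
    assert (s1 * F1 b s1 < 0) by nra. rewrite Rabs_left in Hm' by auto.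
    assert (T * F1 b T < 0) by nra. lra.
  -
    assert (Hpos : forall s, 0 <= s -> 0 < F0 b s).
    { intros s Hs. assert (F0 b (s + 1) < F0 b s) by (apply F0_decr; [auto|lra|intros; apply Hneg; lra]).
      destruct (Rle_lt_dec 0 (F0 b (s+1))). lra. exfalso. apply HnA. exists (s+1). split; lra. }
    assert (HK : 0 < INR (S k)) by (apply lt_0_INR; lia).
    assert (Hii : forall s, 0 < s -> F1 b s <= - F0 b s / INR (S k)).
    { intros s Hs.
      assert (Hd : forall x, 0 <= x <= s -> is_derive (fun t => t ^ (S k) * F1 b t + F0 b s * t ^ (S k) / INR (S k)) x
               (x ^ k * (F1 b x / 2 - F0 b x + F0 b s))).
      { intros x Hx. eapply is_derive_eq. apply (is_derive_plus (fun t => t ^ (S k) * F1 b t) (fun t => F0 b s * t ^ (S k) / INR (S k))).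
        apply psi_deriv; auto.
        apply (is_derive_ext_R (fun t => (F0 b s / INR (S k)) * t ^ (S k))). intros; unfold Rdiv; ring.
        apply is_derive_scal. apply is_derive_pow_id.
        simpl pred. change (plus ?u ?v) with (u + v). field. lra. }
      assert (Hm := mvt_le _ _ 0 s 0 ltac:(lra) Hd).
      assert (Hm' : (s ^ S k * F1 b s + F0 b s * s ^ S k / INR (S k)) - (0 ^ S k * F1 b 0 + F0 b s * 0 ^ S k / INR (S k)) <= 0 * (s - 0)).
      { apply Hm. intros x Hx. 
        assert (F0 b s < F0 b x) by (apply F0_decr; [auto|lra|intros; apply Hneg; lra]).
        pose proof (Hneg x ltac:(lra)). assert (0 < x ^ k) by (apply pow_lt; lra).
        assert (F1 b x / 2 - F0 b x + F0 b s < 0) by lra. nra. }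
      simpl (0 ^ S k) in Hm'. 
      assert (Hsp : 0 < s ^ S k) by (apply pow_lt; lra).
      assert (E : s ^ S k * F1 b s + F0 b s * s ^ S k / INR (S k) = s ^ S k * (F1 b s + F0 b s / INR (S k))) by (field; lra).
      assert (F1 b s + F0 b s / INR (S k) <= 0).
      { destruct (Rle_lt_dec (F1 b s + F0 b s / INR (S k)) 0); auto. exfalso. nra. }
      lra. }
    assert (Hstart : exists C, 0 < C /\ forall t, 1 <= t -> C / t ^ (S k) <= - F1 b t).
    { exists (- F1 b 1). split. pose proof (Hneg 1 ltac:(lra)). lra.
      intros t Ht.
      assert (Hm := mvt_le _ _ 1 t 0 Ht (fun x _ => psi_deriv b k x Hb Hbk)).
      assert (Hm' : t ^ S k * F1 b t - 1 ^ S k * F1 b 1 <= 0 * (t - 1)).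
      { apply Hm. intros x Hx. pose proof (Hneg x ltac:(lra)). pose proof (Hpos x ltac:(lra)).
        assert (0 < x ^ k) by (apply pow_lt; lra). nra. }
      rewrite pow1 in Hm'. assert (0 < t ^ S k) by (apply pow_lt; lra).
      apply Rmult_le_reg_r with (t ^ S k); auto. 
      replace (- F1 b 1 / t ^ S k * t ^ S k) with (- F1 b 1) by (field; lra). nra. }
    destruct (caseB_iter b k (S k) Hb Hneg Hpos Hii Hstart) as [C [HC HCt]].
    set (T := 1 + (F0 b 1 + 1) / C).
    assert (HT : 1 < T). { unfold T. pose proof (Hpos 1 ltac:(lra)). assert (0 < (F0 b 1 + 1) / C) by (apply Rdiv_lt_0_compat; lra). lra. }
    assert (Hm := mvt_le (F0 b) (F1 b) 1 T (- C) ltac:(lra) (fun x _ => F0_deriv b x Hb)).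
    assert (Hm' : F0 b T - F0 b 1 <= - C * (T - 1)).
    { apply Hm. intros x Hx. specialize (HCt x ltac:(lra)). simpl in HCt. lra. }
    replace (- C * (T - 1)) with (- (F0 b 1 + 1)) in Hm' by (unfold T; field; lra).
    pose proof (Hpos T ltac:(lra)). lra.
Qed.

Lemma first_zero b k : 1 <= b -> b = INR k + /2 ->
  exists s0, 0 < s0 /\ F1 b s0 = 0 /\ (forall s, 0 <= s < s0 -> F1 b s < 0).
Proof.
  intros Hb Hbk. destruct (F1_has_zero b k Hb Hbk) as [z [Hz Hz0]].
  set (E := fun t => 0 <= t /\ forall s, 0 <= s <= t -> F1 b s < 0).
  assert (H0 : F1 b 0 < 0). { rewrite F1_at0 by auto. assert (0 < / b) by (apply Rinv_0_lt_compat; lra). lra. }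
  assert (HE0 : E 0). { split. lra. intros s Hs. replace s with 0 by lra. auto. }
  assert (Hbd : bound E). { exists z. intros t [Ht Hs]. destruct (Rle_lt_dec t z); auto.
    specialize (Hs z ltac:(lra)). lra. }
  destruct (completeness E Hbd (ex_intro _ 0 HE0)) as [m [Hub Hlub]].
  assert (Hm0 : 0 <= m) by (apply Hub; auto).
  assert (Hclose : forall e, 0 < e -> exists t, E t /\ m - e < t <= m).
  { intros e He. apply NNPP. intros Hn. assert (m <= m - e). apply Hlub. intros t Ht.
    destruct (Rle_lt_dec t (m - e)) as [Hl|Hl]; auto. exfalso. apply Hn. exists t.
    assert (t <= m) by (apply Hub; auto). split; [exact Ht | lra].
    lra. }
  assert (Hbelow : forall s, 0 <= s < m -> F1 b s < 0).
  { intros s Hs. destruct (Hclose (m - s) ltac:(lra)) as [t [[Ht1 Ht2] Ht3]]. apply Ht2. lra. }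
  destruct (Req_dec (F1 b m) 0) as [He|Hne].
  { exists m. split; [|split]; auto. destruct (Req_dec m 0) as [Hm|Hm]. rewrite Hm in He. lra. lra. }
  exfalso.
  assert (Hpa : 0 < Rabs (F1 b m)) by (apply Rabs_pos_lt; auto).
  destruct (cont_eps (F1 b) m (F1_cont b m Hb) (Rabs (F1 b m)/2) ltac:(lra)) as [d [Hd Hdd]].
  destruct (Rtotal_order (F1 b m) 0) as [Hl|[He|Hg]]; [| contradiction |].
  - assert (E (m + d/2)).
    { split. lra. intros s Hs. destruct (Rle_lt_dec (m - d/2) s).
      * assert (Hsd : Rabs (s - m) < d) by (apply abs_lt_of; lra). specialize (Hdd s Hsd). rewrite (Rabs_left (F1 b m)) in Hdd by auto.
        apply Rabs_def2 in Hdd. lra.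
      * apply Hbelow. lra. }
    assert (m + d/2 <= m) by (apply Hub; auto). lra.
  - destruct (Hclose d Hd) as [t [[Ht1 Ht2] Ht3]].
    specialize (Ht2 t ltac:(lra)).
    assert (Hsd : Rabs (t - m) < d) by (apply abs_lt_of; lra). specialize (Hdd t Hsd). rewrite (Rabs_right (F1 b m)) in Hdd by lra.
    apply Rabs_def2 in Hdd. lra.
Qed.

Lemma F0_at_first_zero b k s0 : 1 <= b -> b = INR k + /2 -> 0 < s0 -> F1 b s0 = 0 ->
  (forall s, 0 <= s < s0 -> F1 b s < 0) -> F0 b s0 < 0.
Proof.
  intros Hb Hbk Hs0 Hz Hneg. destruct (Rlt_le_dec (F0 b s0) 0) as [H|H]; auto. exfalso.
  assert (Hpos : forall t, 0 <= t < s0 -> 0 < F0 b t).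
  { intros t Ht. assert (F0 b s0 < F0 b t) by (apply F0_decr; [auto|lra|intros; apply Hneg; lra]). lra. }
  assert (Hm := mvt_lt _ _ 0 s0 0 Hs0 (fun x _ => psi_deriv b k x Hb Hbk)).
  assert (Hm' : s0 ^ S k * F1 b s0 - 0 ^ S k * F1 b 0 < 0 * (s0 - 0)).
  { apply Hm. intros x Hx. pose proof (Hneg x ltac:(lra)). pose proof (Hpos x ltac:(lra)).
    assert (0 < x ^ k) by (apply pow_lt; lra). nra. }
  rewrite Hz in Hm'. simpl in Hm'. lra.
Qed.

Lemma F1_pos_after b k s0 : 1 <= b -> b = INR k + /2 -> 0 < s0 -> F1 b s0 = 0 -> F0 b s0 < 0 ->
  exists d, 0 < d /\ forall s, s0 < s <= s0 + d -> 0 < F1 b s.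
Proof.
  intros Hb Hbk Hs0 Hz HF0.
  assert (HF2 : 0 < F2 b s0).
  { pose proof (F_ode b s0 Hb). rewrite Hz in H.
    assert (s0 * F2 b s0 = - F0 b s0) by lra.
    destruct (Rle_lt_dec (F2 b s0) 0); auto. nra. }
  destruct (cont_eps (F2 b) s0 (F2_cont b s0 Hb) (F2 b s0 / 2) ltac:(lra)) as [d [Hd Hdd]].
  exists (d/2). split. lra. intros s Hs.
  assert (Hm := mvt_gt (F1 b) (F2 b) s0 s 0 ltac:(lra) (fun x _ => F1_deriv b x Hb)).
  assert (0 * (s - s0) < F1 b s - F1 b s0).
  { apply Hm. intros x Hx. assert (Hxd : Rabs (x - s0) < d) by (apply abs_lt_of; lra).
    specialize (Hdd x Hxd). apply Rabs_def2 in Hdd. lra. }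
  lra.
Qed.

Definition gi (x t : R) := Rpower t (x - 1) * exp (- t).

Lemma Rpower_deriv y t : 0 < t -> is_derive (fun t => Rpower t y) t (y * Rpower t (y - 1)).
Proof. intros Ht. apply is_derive_Reals. apply derivable_pt_lim_power; auto. Qed.

Lemma expn_deriv t : is_derive (fun t => exp (- t)) t (- exp (- t)).
Proof. auto_derive. auto. ring. Qed.

Lemma gi_deriv x t : 0 < t -> is_derive (gi x) t ((x - 1) * Rpower t (x - 1 - 1) * exp (- t) + Rpower t (x - 1) * (- exp (- t))).
Proof. intros Ht. unfold gi. apply (is_derive_mult_R (fun t => Rpower t (x - 1)) (fun t => exp (- t))). apply Rpower_deriv; auto. apply expn_deriv. Qed.

Lemma gi_cont x t : 0 < t -> continuous (gi x) t.
Proof. intros Ht. apply (@ex_derive_continuous R_AbsRing R_NormedModule (gi x) t). eexists. apply gi_deriv; auto. Qed.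

Lemma gi_ex x a b : 0 < a -> a <= b -> ex_RInt (gi x) a b.
Proof. intros Ha Hab. apply (@ex_RInt_continuous R_CompleteNormedModule). intros z Hz. apply gi_cont.
  rewrite Rmin_left in Hz by lra. lra. Qed.

Lemma gi_pos x t : 0 < t -> 0 < gi x t.
Proof. intros. unfold gi, Rpower. apply Rmult_lt_0_compat; apply exp_pos. Qed.

Definition IR (f : R -> R) (l : R) :=
  (forall a b, 0 < a -> a <= b -> ex_RInt f a b) /\
  forall eps, 0 < eps -> exists d M, 0 < d /\ forall a b, 0 < a < d -> M < b -> Rabs (RInt f a b - l) < eps.

Lemma IR_is_RInt_gen f l : IR f l -> is_RInt_gen f (at_right 0) (Rbar_locally p_infty) l.
Proof.
  intros [Hex Hlim]. unfold is_RInt_gen, filterlimi, filter_le, filtermapi.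
  intros P [e HP]. destruct (Hlim e (cond_pos e)) as [d [M [Hd HdM]]].
  apply Filter_prod with (fun a => 0 < a < Rmin d 1) (fun b => Rmax M 1 < b).
  - assert (Hd1 : 0 < Rmin d 1) by (apply Rmin_glb_lt; lra).
    exists (mkposreal _ Hd1). intros y Hy Hpos. split; auto. simpl in Hy.
    change (Rabs (y - 0) < Rmin d 1) in Hy. rewrite Rminus_0_r in Hy. apply Rabs_def2 in Hy. lra.
  - exists (Rmax M 1). auto.
  - intros a b Ha Hb. simpl. exists (RInt f a b).
    assert (Hm1 := Rmin_r d 1). assert (Hm2 := Rmin_l d 1). assert (Hm3 := Rmax_l M 1). assert (Hm4 := Rmax_r M 1).
    split. apply (@RInt_correct R_CompleteNormedModule). apply Hex; lra.
    apply HP. change (Rabs (RInt f a b - l) < e). apply HdM; lra.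
Qed.

Lemma Gamma_IR x l : IR (gi x) l -> Gamma x = l.
Proof.
  intros H. unfold Gamma. apply is_RInt_gen_unique; auto. apply (IR_is_RInt_gen (gi x)). exact H.
Qed.

Definition hb (x t : R) := - (Rpower t x * exp (- t)).

Lemma hb_deriv x t : 0 < t -> is_derive (hb x) t (gi (x + 1) t - x * gi x t).
Proof.
  intros Ht. unfold hb. eapply is_derive_eq.
  apply (is_derive_ext_R (fun t => (-1) * (Rpower t x * exp (- t)))). intros; ring.
  apply is_derive_scal. apply (is_derive_mult_R (fun t => Rpower t x) (fun t => exp (- t))). apply Rpower_deriv; auto. apply expn_deriv.
  unfold gi. replace (x + 1 - 1) with x by ring. ring.
Qed.

Lemma RInt_rec x a b : 0 < a -> a <= b ->
  RInt (gi (x + 1)) a b = x * RInt (gi x) a b + (hb x b - hb x a).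
Proof.
  intros Ha Hab. apply is_RInt_unique.
  apply (is_RInt_ext (fun t => plus (scal x (gi x t)) (gi (x + 1) t - x * gi x t))).
  { intros t Ht. unfold plus, scal; simpl. unfold mult; simpl. ring. }
  apply (is_RInt_plus (fun t => scal x (gi x t)) (fun t => gi (x + 1) t - x * gi x t) a b (x * RInt (gi x) a b) (hb x b - hb x a)).
  - exact (@is_RInt_scal R_NormedModule (gi x) a b x (RInt (gi x) a b) (@RInt_correct R_CompleteNormedModule _ _ _ (gi_ex x a b Ha Hab))).
  - apply (is_RInt_derive (hb x) (fun t => gi (x + 1) t - x * gi x t)).
    + intros t Ht. rewrite Rmin_left in Ht by lra. apply hb_deriv. lra.
    + intros t Ht. rewrite Rmin_left in Ht by lra.
      apply (continuous_plus (fun t => gi (x + 1) t) (fun t => opp (x * gi x t))).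
      apply gi_cont; lra.
      apply (continuous_opp (fun t => x * gi x t)).
      apply (continuous_scal_r x (gi x)). apply gi_cont; lra.
Qed.

Lemma exp_mono_le x y : x <= y -> exp x <= exp y.
Proof. intros H. destruct (Req_dec x y) as [->|Hn]. lra. left. apply exp_increasing. lra. Qed.

Lemma hb_small0 x a : 1 <= x -> 0 < a <= 1 -> Rabs (hb x a) <= a.
Proof.
  intros Hx Ha. unfold hb. rewrite Rabs_Ropp.
  assert (H1 : 0 < Rpower a x) by (unfold Rpower; apply exp_pos).
  rewrite Rabs_pos_eq by (apply Rmult_le_pos; [lra| left; apply exp_pos]).
  assert (Hl : ln a <= 0) by (rewrite <- ln_1; apply ln_le; lra).
  assert (H2 : Rpower a x <= a).
  { unfold Rpower. rewrite <- (exp_ln a) at 2 by lra. apply exp_mono_le. nra. }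
  assert (H3 : exp (- a) <= 1) by (rewrite <- exp_0; apply exp_mono_le; lra).
  assert (0 < exp (-a)) by apply exp_pos. nra.
Qed.

Lemma exp_ge_pow b n : 0 <= b -> b ^ n / INR (fact n) <= exp b.
Proof.
  intros Hb. eapply Rle_trans. 2: apply (exp_ge_taylor b n Hb).
  apply (term_le_sum (fun k => b ^ k / INR (fact k))); auto.
  intros m. apply Rdiv_le_0_compat. apply pow_le; auto. apply lt_0_INR. apply lt_O_fact.
Qed.

Lemma hb_smallinf x N b : x <= INR N -> 1 <= b -> Rabs (hb x b) <= INR (fact (S N)) / b.
Proof.
  intros HxN Hb. unfold hb. rewrite Rabs_Ropp.
  assert (H1 : 0 < Rpower b x) by (unfold Rpower; apply exp_pos).
  rewrite Rabs_pos_eq by (apply Rmult_le_pos; [lra| left; apply exp_pos]).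
  assert (Hl : 0 <= ln b) by (rewrite <- ln_1; apply ln_le; lra).
  assert (H2 : Rpower b x <= b ^ N).
  { rewrite <- Rpower_pow by lra. unfold Rpower. apply exp_mono_le. nra. }
  assert (H3 := exp_ge_pow b (S N) ltac:(lra)).
  assert (HF : 0 < INR (fact (S N))) by (apply lt_0_INR; apply lt_O_fact).
  assert (Hbn : 0 < b ^ N) by (apply pow_lt; lra).
  rewrite exp_Ropp. assert (He : 0 < exp b) by apply exp_pos.
  apply Rle_trans with (b ^ N / exp b). 
  { unfold Rdiv. apply Rmult_le_compat_r. left; apply Rinv_0_lt_compat; auto. auto. }
  apply Rle_trans with (b ^ N / (b ^ S N / INR (fact (S N)))).
  { unfold Rdiv. apply Rmult_le_compat_l. lra. apply Rinv_le_contravar.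
    apply Rdiv_lt_0_compat; auto. apply pow_lt; lra. exact H3. }
  right. rewrite <- tech_pow_Rmult. field. repeat split; lra.
Qed.

Lemma IR_rec x N l : 1 <= x -> x <= INR N -> IR (gi x) l -> IR (gi (x + 1)) (x * l).
Proof.
  intros Hx HxN [Hex Hlim]. split.
  { intros a b Ha Hab. apply gi_ex; auto. }
  intros eps Heps.
  destruct (Hlim (eps / (2 * x))) as [d1 [M1 [Hd1 H1]]]. { apply Rdiv_lt_0_compat; lra. }
  assert (HF : 0 < INR (fact (S N))) by (apply lt_0_INR; apply lt_O_fact).
  exists (Rmin d1 (Rmin 1 (eps / 4))), (Rmax M1 (Rmax 1 (4 * INR (fact (S N)) / eps))).
  split. { apply Rmin_glb_lt; auto. apply Rmin_glb_lt; lra. }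
  intros a b Ha Hb.
  pose proof (Rmin_l d1 (Rmin 1 (eps / 4))). pose proof (Rmin_r d1 (Rmin 1 (eps / 4))).
  pose proof (Rmin_l 1 (eps / 4)). pose proof (Rmin_r 1 (eps / 4)).
  pose proof (Rmax_l M1 (Rmax 1 (4 * INR (fact (S N)) / eps))). pose proof (Rmax_r M1 (Rmax 1 (4 * INR (fact (S N)) / eps))).
  pose proof (Rmax_l 1 (4 * INR (fact (S N)) / eps)). pose proof (Rmax_r 1 (4 * INR (fact (S N)) / eps)).
  rewrite RInt_rec by lra.
  specialize (H1 a b ltac:(lra) ltac:(lra)).
  assert (Ha0 := hb_small0 x a Hx ltac:(lra)).
  assert (Hb0 := hb_smallinf x N b HxN ltac:(lra)).
  assert (Hb1 : INR (fact (S N)) / b < eps / 4).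
  { apply Rmult_lt_reg_r with b. lra. unfold Rdiv. rewrite Rmult_assoc, Rinv_l by lra.
    assert (Hq : 4 * INR (fact (S N)) / eps < b) by lra.
    apply Rmult_lt_compat_r with (r := eps) in Hq; auto. unfold Rdiv in Hq.
    rewrite Rmult_assoc, Rinv_l in Hq by lra. lra. }
  replace (x * RInt (gi x) a b + (hb x b - hb x a) - x * l) with (x * (RInt (gi x) a b - l) + hb x b - hb x a) by ring.
  assert (Hxr : Rabs (x * (RInt (gi x) a b - l)) < eps / 2).
  { rewrite Rabs_mult, Rabs_pos_eq by lra.
    replace (eps / 2) with (x * (eps / (2 * x))) by (field; lra).
    apply Rmult_lt_compat_l; lra. }
  unfold Rminus. 
  pose proof (Rabs_triang (x * (RInt (gi x) a b + - l) + hb x b) (- hb x a)).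
  pose proof (Rabs_triang (x * (RInt (gi x) a b + - l)) (hb x b)).
  rewrite Rabs_Ropp in *. unfold Rminus in Hxr. lra.
Qed.

Lemma gi32 t : 0 < t -> gi (3/2) t = sqrt t * exp (- t).
Proof. intros Ht. unfold gi. replace (3/2 - 1) with (/2) by field. rewrite Rpower_sqrt; auto. Qed.

Lemma RInt_mono_gi x a a0 b0 b : 0 < a -> a <= a0 -> a0 <= b0 -> b0 <= b ->
  RInt (gi x) a0 b0 <= RInt (gi x) a b.
Proof.
  intros Ha H1 H2 H3.
  assert (E1 : RInt (gi x) a b = RInt (gi x) a a0 + RInt (gi x) a0 b).
  { symmetry. apply (@RInt_Chasles R_CompleteNormedModule); apply gi_ex; lra. }
  assert (E2 : RInt (gi x) a0 b = RInt (gi x) a0 b0 + RInt (gi x) b0 b).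
  { symmetry. apply (@RInt_Chasles R_CompleteNormedModule); apply gi_ex; lra. }
  assert (P1 : 0 <= RInt (gi x) a a0).
  { apply RInt_ge_0; auto. apply gi_ex; lra. intros t Ht. left. apply gi_pos. lra. }
  assert (P2 : 0 <= RInt (gi x) b0 b).
  { apply RInt_ge_0; auto. apply gi_ex; lra. intros t Ht. left. apply gi_pos. lra. }
  lra.
Qed.

Lemma gi32_bound a b : 0 < a -> a <= b -> RInt (gi (3/2)) a b <= 2.
Proof.
  intros Ha Hab.
  set (g := fun t => (1 + t) * exp (- t)).
  set (G := fun t => - ((2 + t) * exp (- t))).
  assert (HG : forall t, is_derive G t (g t)). { intros t. unfold G, g. auto_derive. auto. ring. }
  assert (Hgc : forall t, continuous g t).
  { intros t. apply (@ex_derive_continuous R_AbsRing R_NormedModule g t). unfold g. auto_derive. auto. }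
  assert (HI : is_RInt g a b (G b - G a)).
  { apply (is_RInt_derive G g). intros; apply HG. intros; apply Hgc. }
  assert (Hle : RInt (gi (3/2)) a b <= RInt g a b).
  { apply RInt_le; auto. apply gi_ex; auto. exists (G b - G a); auto.
    intros t Ht. rewrite gi32 by lra. unfold g.
    apply Rmult_le_compat_r. left; apply exp_pos.
    pose proof (sqrt_sqrt t ltac:(lra)). pose proof (sqrt_pos t). nra. }
  rewrite (is_RInt_unique g a b _ HI) in Hle.
  unfold G in Hle.
  assert (He1 : 0 < exp (- b)) by apply exp_pos.
  assert (He2 : (2 + a) * exp (- a) <= 2).
  { rewrite exp_Ropp. assert (H1 := exp_ineq1 a ltac:(lra)). assert (0 < exp a) by apply exp_pos.
    apply Rmult_le_reg_r with (exp a); auto. rewrite Rmult_assoc, Rinv_l by lra. lra. }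
  assert (0 <= (2 + b) * exp (- b)) by (apply Rmult_le_pos; lra).
  lra.
Qed.

Lemma gi32_pos12 : 0 < RInt (gi (3/2)) 1 2.
Proof.
  assert (H : RInt (fun _ => exp (-2)) 1 2 <= RInt (gi (3/2)) 1 2).
  { apply RInt_le. lra. apply (@ex_RInt_const R_CompleteNormedModule). apply gi_ex; lra.
    intros t Ht. rewrite gi32 by lra. rewrite <- (Rmult_1_l (exp (-2))).
    apply Rmult_le_compat; try lra. left; apply exp_pos.
    rewrite <- sqrt_1. apply sqrt_le_1_alt. lra. apply exp_mono_le. lra. }
  rewrite RInt_const in H. change (scal (2 - 1) (exp (-2))) with ((2 - 1) * exp (-2)) in H.
  pose proof (exp_pos (-2)). lra.
Qed.

Lemma IR_32 : exists l, 0 < l /\ IR (gi (3/2)) l.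
Proof.
  set (E := fun y => exists a b, 0 < a <= b /\ y = RInt (gi (3/2)) a b).
  assert (Hbd : bound E). { exists 2. intros y [a [b [Hab ->]]]. apply gi32_bound; lra. }
  assert (HE : E (RInt (gi (3/2)) 1 2)). { exists 1, 2. split; auto; lra. }
  destruct (completeness E Hbd (ex_intro _ _ HE)) as [l [Hub Hlub]].
  exists l. split. { pose proof gi32_pos12. pose proof (Hub _ HE). lra. }
  split. { intros; apply gi_ex; auto. }
  intros eps Heps.
  assert (Hex : exists y, E y /\ l - eps < y).
  { apply NNPP. intros Hn. assert (l <= l - eps). apply Hlub. intros y Hy.
    destruct (Rle_lt_dec y (l - eps)); auto. exfalso. apply Hn. exists y; auto. lra. }
  destruct Hex as [y [[a0 [b0 [Hab0 ->]]] Hy]].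
  exists a0, b0. split. lra. intros a b Ha Hb.
  assert (H1 := RInt_mono_gi (3/2) a a0 b0 b ltac:(lra) ltac:(lra) ltac:(lra) ltac:(lra)).
  assert (H2 : RInt (gi (3/2)) a b <= l). { apply Hub. exists a, b. split; auto; lra. }
  apply Rabs_def1; lra.
Qed.

Fixpoint poch (x : R) (m : nat) : R := match m with O => 1 | S p => poch x p * (x + INR p) end.

Fixpoint Lm (l0 : R) (j : nat) : R := match j with O => l0 | S p => (3/2 + INR p) * Lm l0 p end.

Lemma IR_Lm l0 j : IR (gi (3/2)) l0 -> IR (gi (3/2 + INR j)) (Lm l0 j).
Proof.
  intros H0. induction j. simpl. replace (3/2 + 0) with (3/2) by ring. auto.
  simpl Lm. replace (3/2 + INR (S j)) with (3/2 + INR j + 1) by (rewrite S_INR; ring).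
  apply (IR_rec _ (j + 2)); auto. pose proof (pos_INR j); lra.
  rewrite plus_INR. simpl. lra.
Qed.

Lemma Lm_pos l0 j : 0 < l0 -> 0 < Lm l0 j.
Proof. intros H. induction j; simpl; auto. apply Rmult_lt_0_compat; auto. pose proof (pos_INR j); lra. Qed.

Lemma Lm_add l0 j m : Lm l0 (j + m) = poch (3/2 + INR j) m * Lm l0 j.
Proof.
  induction m. rewrite Nat.add_0_r. simpl. ring.
  rewrite Nat.add_succ_r. simpl Lm. simpl poch. rewrite IHm, plus_INR. ring.
Qed.

Lemma Gamma_facts k : (1 <= k)%nat ->
  0 < Gamma (INR k + /2) /\ forall m, Gamma (INR m + (INR k + /2)) = poch (INR k + /2) m * Gamma (INR k + /2).
Proof.
  intros Hk. destruct IR_32 as [l0 [Hl0 HIR]].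
  assert (HG : forall j, Gamma (3/2 + INR j) = Lm l0 j) by (intros; apply Gamma_IR; apply IR_Lm; auto).
  assert (Ek : INR k + /2 = 3/2 + INR (k - 1)) by (rewrite minus_INR by lia; simpl; field).
  split.
  - rewrite Ek, HG. apply Lm_pos; auto.
  - intros m. replace (INR m + (INR k + /2)) with (3/2 + INR (k - 1 + m)) by (rewrite plus_INR, Ek; ring).
    rewrite Ek, !HG, Lm_add. reflexivity.
Qed.

Fixpoint ff (x : R) (r : nat) : R := match r with O => 1 | S p => ff x p * (x - INR p) end.
Fixpoint QQ (m : nat) (N : R) : R := match m with O => 1 | S p => QQ p N * (N * N - INR p * INR p) end.
Fixpoint DD (m : nat) : R := match m with O => 1 | S p => DD p * ((INR p + /2) * INR (S p)) end.
Definition Tc (N : R) (m : nat) : R := (-1) ^ m * QQ m N / DD m.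

Lemma ff_shift x r : ff (x + 1) (S r) = (x + 1) * ff x r.
Proof.
  induction r. simpl. ring.
  change (ff (x + 1) (S (S r))) with (ff (x + 1) (S r) * (x + 1 - INR (S r))).
  rewrite IHr. change (ff x (S r)) with (ff x r * (x - INR r)). rewrite S_INR. ring.
Qed.

Lemma ff_diff x r : ff (x + 1) (S r) - ff x (S r) = INR (S r) * ff x r.
Proof. rewrite ff_shift. change (ff x (S r)) with (ff x r * (x - INR r)). rewrite S_INR. ring. Qed.

Lemma ff_diff2 x r : ff (x + 2) (S (S r)) - 2 * ff (x + 1) (S (S r)) + ff x (S (S r)) = INR (S (S r)) * INR (S r) * ff x r.
Proof.
  replace (x + 2) with (x + 1 + 1) by ring.
  replace (ff (x + 1 + 1) (S (S r)) - 2 * ff (x + 1) (S (S r)) + ff x (S (S r))) with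
    ((ff (x + 1 + 1) (S (S r)) - ff (x + 1) (S (S r))) - (ff (x + 1) (S (S r)) - ff x (S (S r)))) by ring.
  rewrite !ff_diff. rewrite Rmult_assoc, <- Rmult_minus_distr_l, ff_diff. ring.
Qed.

Lemma QQ_ff m N : QQ (S m) N = N * ff (N + INR m) (S (2 * m)).
Proof.
  induction m. simpl. ring.
  change (QQ (S (S m)) N) with (QQ (S m) N * (N * N - INR (S m) * INR (S m))).
  rewrite IHm. replace (S (2 * S m)) with (S (S (S (2 * m)))) by lia.
  replace (N + INR (S m)) with (N + INR m + 1) by (rewrite S_INR; ring).
  rewrite ff_shift. change (ff (N + INR m) (S (S (2 * m)))) with (ff (N + INR m) (S (2 * m)) * (N + INR m - INR (S (2 * m)))).
  rewrite !S_INR, mult_INR. simpl (INR 2). ring.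
Qed.

Lemma QQ_half m N : QQ (S m) N = (ff (N + INR m) (S (S (2 * m))) + ff (N + INR m + 1) (S (S (2 * m)))) / 2.
Proof.
  rewrite QQ_ff, ff_shift.
  change (ff (N + INR m) (S (S (2 * m)))) with (ff (N + INR m) (S (2 * m)) * (N + INR m - INR (S (2 * m)))).
  rewrite S_INR, mult_INR. simpl (INR 2). field.
Qed.

Lemma QQ_diff2 p N : QQ (S p) (N + 2) - 2 * QQ (S p) (N + 1) + QQ (S p) N = 2 * INR (S p) * INR (S (2 * p)) * QQ p (N + 1).
Proof.
  destruct p as [|m].
  - simpl. ring.
  - rewrite !QQ_half.
    replace (S (S (2 * S m))) with (S (S (S (S (2 * m))))) by lia.
    set (r := S (S (2 * m))).
    set (X := N + INR (S m)).
    assert (E1 : N + 2 + INR (S m) = X + 2) by (unfold X; ring). rewrite E1.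
    assert (E2 : X + 2 + 1 = X + 1 + 2) by ring. rewrite E2.
    assert (E3 : N + 1 + INR (S m) = X + 1) by (unfold X; ring). rewrite E3.
    replace ((ff (X + 2) (S (S r)) + ff (X + 1 + 2) (S (S r))) / 2 -
      2 * ((ff (X + 1) (S (S r)) + ff (X + 1 + 1) (S (S r))) / 2) +
      (ff X (S (S r)) + ff (X + 1) (S (S r))) / 2)
    with (((ff (X + 2) (S (S r)) - 2 * ff (X + 1) (S (S r)) + ff X (S (S r)))
         + (ff (X + 1 + 2) (S (S r)) - 2 * ff (X + 1 + 1) (S (S r)) + ff (X + 1) (S (S r)))) / 2) by field.
    rewrite !ff_diff2.
    replace (N + 1 + INR m) with X by (unfold X; rewrite S_INR; ring).
    unfold r. replace (S (2 * S m)) with (S (S (S (2 * m)))) by lia. repeat rewrite S_INR. rewrite mult_INR. replace (INR 2) with 2 by (simpl; ring). field.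
Qed.

Lemma DD_pos m : 0 < DD m.
Proof. induction m. simpl; lra. change (DD (S m)) with (DD m * ((INR m + /2) * INR (S m))). apply Rmult_lt_0_compat; auto. apply Rmult_lt_0_compat.
  pose proof (pos_INR m); lra. apply lt_0_INR; lia. Qed.

Lemma Tc_S N j : Tc N (S j) = Tc N j * (INR j * INR j - N * N) / ((INR j + /2) * INR (S j)).
Proof.
  unfold Tc. change (QQ (S j) N) with (QQ j N * (N * N - INR j * INR j)).
  change (DD (S j)) with (DD j * ((INR j + /2) * INR (S j))). pose proof (DD_pos j).
  assert (0 < INR (S j)) by (apply lt_0_INR; lia). assert (0 < INR j + /2) by (pose proof (pos_INR j); lra).
  simpl pow. field. repeat split; lra.
Qed.

Lemma Tc_rec N p : Tc (N + 2) (S p) = 2 * Tc (N + 1) (S p) - 4 * Tc (N + 1) p - Tc N (S p).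
Proof.
  unfold Tc. pose proof (QQ_diff2 p N) as H.
  change (DD (S p)) with (DD p * ((INR p + /2) * INR (S p))).
  pose proof (DD_pos p). assert (0 < INR (S p)) by (apply lt_0_INR; lia).
  assert (0 < INR p + /2) by (pose proof (pos_INR p); lra).
  replace (QQ (S p) (N + 2)) with (2 * INR (S p) * INR (S (2 * p)) * QQ p (N + 1) + 2 * QQ (S p) (N + 1) - QQ (S p) N) by lra.
  rewrite (S_INR (2 * p)), mult_INR, (S_INR p). simpl pow. replace (INR 2) with 2 by (simpl; ring). field. lra.
Qed.

Lemma QQ_zero n j : QQ (S n + j) (INR n) = 0.
Proof.
  induction j. rewrite Nat.add_0_r. change (QQ (S n) (INR n)) with (QQ n (INR n) * (INR n * INR n - INR n * INR n)). ring.
  rewrite Nat.add_succ_r.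
  change (QQ (S (S n + j)) (INR n)) with (QQ (S n + j) (INR n) * (INR n * INR n - INR (S n + j) * INR (S n + j))).
  rewrite IHj. ring.
Qed.

Lemma Tc_zero n m : (n < m)%nat -> Tc (INR n) m = 0.
Proof.
  intros H. unfold Tc. replace m with (S n + (m - S n))%nat by lia. rewrite QQ_zero. unfold Rdiv. ring.
Qed.

Definition cc (n : nat) (m : nat) : R := Tc (INR n) m * (- / 2) ^ m.

Lemma cc_zero n m : (n < m)%nat -> cc n m = 0.
Proof. intros H. unfold cc. rewrite Tc_zero; auto. ring. Qed.

Lemma CV_cc n : CV_radius (cc n) = p_infty.
Proof. apply (CV_radius_finsupp _ n). intros; apply cc_zero; auto. Qed.

Lemma ChebT_S0 x : ChebT 0 x = 1.
Proof. reflexivity. Qed.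
Lemma ChebT_S1 x : ChebT 1 x = x.
Proof. reflexivity. Qed.
Lemma ChebT_SS n x : ChebT (S (S n)) x = 2 * x * ChebT (S n) x - ChebT n x.
Proof.
  unfold ChebT. simpl cheb_pair. destruct (cheb_pair n x) as [a b]. simpl. reflexivity.
Qed.

Lemma ex_pseries_inf a y : CV_radius a = p_infty -> ex_pseries a y.
Proof. intros H. apply CV_radius_inside. rewrite H. exact I. Qed.

Lemma ChebT_PSeries n x : ChebT n x = PSeries (cc n) (x - 1).
Proof.
  revert x. cut (forall x, ChebT n x = PSeries (cc n) (x - 1) /\ ChebT (S n) x = PSeries (cc (S n)) (x - 1)).
  { intros H x. apply H. }
  induction n; intros x.
  - split.
    + rewrite ChebT_S0. unfold PSeries. rewrite (Series_finsupp _ 0). simpl. unfold cc, Tc. simpl. field.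
      intros m Hm. rewrite cc_zero; auto. ring.
    + rewrite ChebT_S1. unfold PSeries. rewrite (Series_finsupp _ 1). simpl. unfold cc, Tc. simpl. field.
      intros m Hm. rewrite cc_zero; auto. ring.
  - destruct (IHn x) as [H0 H1]. split; auto.
    rewrite ChebT_SS, H0, H1.
    set (y := x - 1). replace x with (1 + y) by (unfold y; ring).
    assert (R0 := CV_cc n). assert (R1 := CV_cc (S n)).
    transitivity (PSeries (PS_plus (PS_plus (PS_scal 2 (cc (S n))) (PS_scal 2 (PS_incr_1 (cc (S n))))) (PS_scal (-1) (cc n))) y).
    + rewrite PSeries_plus, PSeries_plus, !PSeries_scal, PSeries_incr_1.
      * ring.
      * apply ex_pseries_inf; rewrite CV_radius_scal; auto; lra.
      * apply ex_pseries_inf. rewrite CV_radius_scal, CV_radius_incr_1; auto; lra.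
      * apply CV_radius_inside. eapply Rbar_lt_le_trans. 2: apply CV_radius_plus.
        rewrite CV_radius_scal, CV_radius_scal, CV_radius_incr_1, R1; [exact I| lra | lra].
      * apply ex_pseries_inf; rewrite CV_radius_scal; auto; lra.
    + apply PSeries_ext. intros m.
      change (PS_plus (PS_plus (PS_scal 2 (cc (S n))) (PS_scal 2 (PS_incr_1 (cc (S n))))) (PS_scal (-1) (cc n)) m)
        with (2 * cc (S n) m + 2 * (match m with O => 0 | S p => cc (S n) p end) + (-1) * cc n m).
      destruct m as [|p].
      * unfold cc, Tc. simpl. field.
      * unfold cc. replace (INR (S (S n))) with (INR n + 2) by (rewrite !S_INR; ring).
        replace (INR (S n)) with (INR n + 1) by (rewrite S_INR; ring).
        rewrite Tc_rec. simpl pow. field.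
Qed.

Fixpoint gG (b : R) (k n : nat) (m : nat) : R :=
  match m with
  | O => 1
  | S p => gG b k n p * (((INR k + INR p) * (INR k + INR p) - INR n * INR n) / (INR n * INR n)) / ((b + INR p) * INR (S p))
  end.

Lemma gG_S b k n p : gG b k n (S p) =
  gG b k n p * (((INR k + INR p) * (INR k + INR p) - INR n * INR n) / (INR n * INR n)) / ((b + INR p) * INR (S p)).
Proof. reflexivity. Qed.

Lemma cc_S n j : cc n (S j) = cc n j * ((INR j * INR j - INR n * INR n) / ((INR j + /2) * INR (S j))) * (- / 2).
Proof. unfold cc. rewrite Tc_S. simpl pow. unfold Rdiv. ring. Qed.

Lemma deriv_coef b k n m : (1 <= n)%nat -> b = INR k + /2 ->
  PS_derive_n k (cc n) m * (- 2 / (INR n * INR n)) ^ m = INR (fact k) * cc n k * gG b k n m.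
Proof.
  intros Hn Hb. assert (HN : 0 < INR n) by (apply lt_0_INR; lia).
  induction m.
  - unfold PS_derive_n. simpl. field. 
  - unfold PS_derive_n in *. replace (S m + k)%nat with (S (m + k)) by lia.
    change (fact (S (m + k))) with (S (m + k) * fact (m + k))%nat.
    change (fact (S m)) with (S m * fact m)%nat.
    transitivity ((INR (fact k) * cc n k * gG b k n m) * (((INR k + INR m) * (INR k + INR m) - INR n * INR n) / (INR n * INR n)) / ((b + INR m) * INR (S m))).
    2: { rewrite (gG_S b k n m). unfold Rdiv. ring. }
    rewrite <- IHm. rewrite !mult_INR, cc_S.
    assert (0 < INR (fact m)) by (apply lt_0_INR; apply lt_O_fact).
    assert (0 < INR (S m)) by (apply lt_0_INR; lia).
    assert (0 < INR (S (m + k))) by (apply lt_0_INR; lia).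
    rewrite (S_INR (m + k)) in *. rewrite (S_INR m) in *. rewrite plus_INR in *. subst b.
    pose proof (pos_INR m). pose proof (pos_INR k).
    simpl pow. field. repeat split; lra.
Qed.

Definition Tk (k n : nat) := INR (fact k) * cc n k.
Definition sOf (n : nat) (x : R) := (1 - x) * (INR n * INR n) / 2.

Lemma ChebT_Dk b k n x : (1 <= n)%nat -> b = INR k + /2 ->
  Derive_n (ChebT n) k x = Tk k n * PSeries (gG b k n) (sOf n x).
Proof.
  intros Hn Hb. assert (HN : 0 < INR n) by (apply lt_0_INR; lia).
  rewrite (Derive_n_ext (ChebT n) (fun y => PSeries (cc n) (y + -1))) by (intros; apply ChebT_PSeries).
  rewrite (Derive_n_comp_trans (PSeries (cc n))).
  rewrite Derive_n_PSeries by (rewrite CV_cc; exact I).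
  unfold PSeries, Tk. rewrite <- Series_scal_l. apply Series_ext. intros m.
  replace (x + -1) with ((- 2 / (INR n * INR n)) * sOf n x) by (unfold sOf; field; lra).
  rewrite Rpow_mult_distr. rewrite <- Rmult_assoc, (deriv_coef b); auto. ring.
Qed.

Lemma ChebT_DSk b k n x : (1 <= n)%nat -> b = INR k + /2 ->
  Derive_n (ChebT n) (S k) x = Tk k n * (- (INR n * INR n) / 2) * PSeries (PS_derive (gG b k n)) (sOf n x).
Proof.
  intros Hn Hb. assert (HN : 0 < INR n) by (apply lt_0_INR; lia).
  rewrite (Derive_n_ext (ChebT n) (fun y => PSeries (cc n) (y + -1))) by (intros; apply ChebT_PSeries).
  rewrite (Derive_n_comp_trans (PSeries (cc n))).
  rewrite Derive_n_PSeries by (rewrite CV_cc; exact I).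
  unfold PSeries, Tk. rewrite <- Series_scal_l. apply Series_ext. intros m.
  replace (x + -1) with ((- 2 / (INR n * INR n)) * sOf n x) by (unfold sOf; field; lra).
  rewrite Rpow_mult_distr.
  assert (E : PS_derive_n (S k) (cc n) m = INR (S m) * PS_derive_n k (cc n) (S m)).
  { unfold PS_derive_n. replace (m + S k)%nat with (S m + k)%nat by lia.
    change (fact (S m)) with (S m * fact m)%nat. rewrite mult_INR.
    assert (0 < INR (fact m)) by (apply lt_0_INR; apply lt_O_fact).
    assert (0 < INR (S m)) by (apply lt_0_INR; lia). field. lra. }
  rewrite E. unfold PS_derive.
  assert (E2 := deriv_coef b k n (S m) Hn Hb). simpl pow in E2.
  replace (INR (S m) * PS_derive_n k (cc n) (S m) * ((- 2 / (INR n * INR n)) ^ m * sOf n x ^ m))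
    with (INR (S m) * (PS_derive_n k (cc n) (S m) * (- 2 / (INR n * INR n) * (- 2 / (INR n * INR n)) ^ m)) * sOf n x ^ m * (- (INR n * INR n) / 2)) by (field; lra).
  rewrite E2. ring.
Qed.

Lemma gG_zero b k n j : (k <= n)%nat -> gG b k n (S (n - k) + j) = 0.
Proof.
  intros Hkn. induction j.
  - rewrite Nat.add_0_r. rewrite gG_S. replace (INR k + INR (n - k)) with (INR n) by (rewrite minus_INR by lia; ring).
    unfold Rdiv. ring.
  - rewrite Nat.add_succ_r, gG_S, IHj. unfold Rdiv. ring.
Qed.

Lemma gG_zero' b k n m : (k <= n)%nat -> (n - k < m)%nat -> gG b k n m = 0.
Proof. intros H1 H2. replace m with (S (n - k) + (m - S (n - k)))%nat by lia. apply gG_zero; auto. Qed.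

Lemma factor_bound k n m : (k + m <= n)%nat -> 0 < INR n ->
  -1 <= ((INR k + INR m) * (INR k + INR m) - INR n * INR n) / (INR n * INR n) <= 0.
Proof.
  intros H HN. assert (Hle : INR k + INR m <= INR n) by (rewrite <- plus_INR; apply le_INR; auto).
  pose proof (pos_INR k). pose proof (pos_INR m).
  assert (0 < INR n * INR n) by nra.
  split.
  - apply Rmult_le_reg_r with (INR n * INR n); auto. unfold Rdiv. rewrite Rmult_assoc, Rinv_l by lra. nra.
  - apply Rmult_le_reg_r with (INR n * INR n); auto. unfold Rdiv. rewrite Rmult_assoc, Rinv_l by lra. nra.
Qed.

Lemma gG_sign b k n m : 1 <= b -> (k <= n)%nat -> (1 <= n)%nat -> 0 <= (-1) ^ m * gG b k n m.
Proof.
  intros Hb Hkn Hn. assert (HN : 0 < INR n) by (apply lt_0_INR; lia).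
  induction m. simpl; lra.
  destruct (le_lt_dec (k + m) n) as [Hle|Hgt].
  - rewrite gG_S. pose proof (factor_bound k n m Hle HN).
    assert (0 < (b + INR m) * INR (S m)). { apply Rmult_lt_0_compat. pose proof (pos_INR m); lra. apply lt_0_INR; lia. }
    assert (0 < b + INR m) by (pose proof (pos_INR m); lra). assert (0 < INR (S m)) by (apply lt_0_INR; lia).
    set (f := ((INR k + INR m) * (INR k + INR m) - INR n * INR n) / (INR n * INR n)) in *.
    replace ((-1) ^ S m * (gG b k n m * f / ((b + INR m) * INR (S m)))) with
      (((-1) ^ m * gG b k n m) * (- f) / ((b + INR m) * INR (S m))) by (change ((-1) ^ S m) with (-1 * (-1) ^ m); field; lra).
    apply Rdiv_le_0_compat; auto. apply Rmult_le_pos; lra.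
  - rewrite gG_S, (gG_zero' b k n m) by lia. unfold Rdiv. lra.
Qed.

Lemma gG_dom b k n m : 1 <= b -> (k <= n)%nat -> (1 <= n)%nat -> Rabs (gG b k n m) <= Rabs (fF b m).
Proof.
  intros Hb Hkn Hn. assert (HN : 0 < INR n) by (apply lt_0_INR; lia).
  induction m. simpl. lra.
  destruct (le_lt_dec (k + m) n) as [Hle|Hgt].
  - rewrite gG_S, fF_S. pose proof (factor_bound k n m Hle HN).
    assert (Hp : 0 < (b + INR m) * INR (S m)). { apply Rmult_lt_0_compat. pose proof (pos_INR m); lra. apply lt_0_INR; lia. }
    set (f := ((INR k + INR m) * (INR k + INR m) - INR n * INR n) / (INR n * INR n)) in *.
    unfold Rdiv. rewrite !Rabs_mult, Rabs_Rinv by lra. rewrite (Rabs_pos_eq ((b + INR m) * INR (S m))) by lra.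
    assert (Rabs f <= 1) by (apply Rabs_le; lra). replace (Rabs (-1)) with 1 by (rewrite Rabs_left; lra).
    assert (0 < / ((b + INR m) * INR (S m))) by (apply Rinv_0_lt_compat; lra).
    pose proof (Rabs_pos (gG b k n m)). pose proof (Rabs_pos f).
    apply Rmult_le_compat_r. lra. rewrite Rmult_1_r.
    apply Rle_trans with (Rabs (gG b k n m) * 1). apply Rmult_le_compat_l; lra. lra.
  - rewrite gG_S, (gG_zero' b k n m) by lia. unfold Rdiv. rewrite !Rmult_0_l, Rabs_R0. apply Rabs_pos.
Qed.

Lemma lim_invn : is_lim_seq (fun n => / INR n) 0.
Proof. apply is_lim_seq_incr_1. apply lim_inv_S. Qed.

Lemma gG_lim b k m : 1 <= b -> is_lim_seq (fun n => gG b k n m) (fF b m).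
Proof.
  intros Hb. induction m. simpl. apply is_lim_seq_const.
  rewrite fF_S.
  apply (is_lim_seq_ext_loc (fun n => gG b k n m * ((INR k + INR m) * (INR k + INR m) * (/ INR n * / INR n) - 1) * / ((b + INR m) * INR (S m)))).
  - exists 1%nat. intros n Hn. assert (HN : 0 < INR n) by (apply lt_0_INR; lia). rewrite gG_S. field.
    split. lra. split. apply Rgt_not_eq. apply lt_0_INR; lia. pose proof (pos_INR m). lra.
  - unfold Rdiv. apply is_lim_seq_mult'; [|apply is_lim_seq_const].
    apply is_lim_seq_mult'; auto.
    replace (-1) with ((INR k + INR m) * (INR k + INR m) * (0 * 0) - 1) by ring.
    apply is_lim_seq_minus'; [|apply is_lim_seq_const].
    apply is_lim_seq_mult'; [apply is_lim_seq_const|].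
    apply is_lim_seq_mult'; apply lim_invn.
Qed.

Lemma CV_gG b k n : (k <= n)%nat -> CV_radius (gG b k n) = p_infty.
Proof. intros H. apply (CV_radius_finsupp _ (n - k)). intros m Hm. apply gG_zero'; auto. Qed.

Lemma CV_dgG b k n : (k <= n)%nat -> CV_radius (PS_derive (gG b k n)) = p_infty.
Proof. intros H. rewrite CV_radius_derive. apply CV_gG; auto. Qed.

Lemma QQ_pos j n : (j <= n)%nat -> (1 <= n)%nat -> 0 < QQ j (INR n).
Proof.
  intros H Hn. induction j. simpl; lra.
  change (QQ (S j) (INR n)) with (QQ j (INR n) * (INR n * INR n - INR j * INR j)).
  apply Rmult_lt_0_compat. apply IHj; lia.
  assert (INR j < INR n) by (apply lt_INR; lia). pose proof (pos_INR j). nra.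
Qed.

Lemma Tk_pos k n : (k <= n)%nat -> (1 <= n)%nat -> 0 < Tk k n.
Proof.
  intros H Hn. unfold Tk, cc, Tc. apply Rmult_lt_0_compat. apply lt_0_INR, lt_O_fact.
  replace ((-1) ^ k * QQ k (INR n) / DD k * (- / 2) ^ k) with (QQ k (INR n) / DD k * ((-1) * (- / 2)) ^ k)
    by (rewrite Rpow_mult_distr; field; pose proof (DD_pos k); lra).
  apply Rmult_lt_0_compat. apply Rdiv_lt_0_compat. apply QQ_pos; auto. apply DD_pos.
  apply pow_lt. lra.
Qed.

Lemma Series_nonpos (v : nat -> R) : ex_series v -> (forall m, v m <= 0) -> Series v <= 0.
Proof.
  intros Hex Hv.
  assert (H := Series_le (fun _ => 0) (fun m => (-1) * v m)).
  rewrite Series_scal_l in H. rewrite (Series_finsupp (fun _ => 0) 0) in H by auto. simpl in H.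
  assert (0 <= -1 * Series v). { apply H. intros m. specialize (Hv m). lra. apply (@ex_series_scal_l R_AbsRing R_NormedModule (-1) v). auto. }
  lra.
Qed.

Lemma dG_neg b k n s : 1 <= b -> b = INR k + /2 -> (k < n)%nat -> s <= 0 -> PSeries (PS_derive (gG b k n)) s < 0.
Proof.
  intros Hb Hbk Hkn Hs. assert (HN : 0 < INR n) by (apply lt_0_INR; lia).
  assert (Hex : ex_series (fun m => PS_derive (gG b k n) m * s ^ m)).
  { apply ex_series_of_pseries. apply ex_pseries_inf. apply CV_dgG. lia. }
  unfold PSeries. rewrite Series_incr_1 by auto.
  assert (Hu : forall m, PS_derive (gG b k n) m * s ^ m <= 0).
  { intros m. unfold PS_derive.
    pose proof (gG_sign b k n (S m) Hb ltac:(lia) ltac:(lia)).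
    replace s with ((-1) * Rabs s) by (rewrite Rabs_left1 by auto; ring).
    rewrite Rpow_mult_distr.
    replace (INR (S m) * gG b k n (S m) * ((-1) ^ m * Rabs s ^ m)) with
      (- (INR (S m) * ((-1) ^ S m * gG b k n (S m)) * Rabs s ^ m)).
    2: { change ((-1) ^ S m) with (-1 * (-1) ^ m). ring. }
    assert (0 <= INR (S m) * ((-1) ^ S m * gG b k n (S m)) * Rabs s ^ m).
    { apply Rmult_le_pos. apply Rmult_le_pos; auto. apply pos_INR. apply pow_le, Rabs_pos. }
    lra. }
  assert (Hrest : Series (fun m => PS_derive (gG b k n) (S m) * s ^ S m) <= 0).
  { apply Series_nonpos. apply (ex_series_incr_1 (fun m => PS_derive (gG b k n) m * s ^ m)). auto.
    intros; apply Hu. }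
  assert (H0 : PS_derive (gG b k n) 0 * s ^ 0 < 0).
  { unfold PS_derive. simpl pow. rewrite gG_S. simpl gG.
    assert (INR k < INR n) by (apply lt_INR; auto). pose proof (pos_INR k).
    replace (INR (S 0)) with 1 by (simpl; ring). replace (INR 0) with 0 by (simpl; ring).
    assert (Hq : ((INR k + 0) * (INR k + 0) - INR n * INR n) / (INR n * INR n) < 0).
    { apply Rmult_lt_reg_r with (INR n * INR n). nra. unfold Rdiv. rewrite Rmult_assoc, Rinv_l by nra. nra. }
    assert (0 < / ((b + 0) * 1)) by (apply Rinv_0_lt_compat; lra).
    unfold Rdiv in *. nra. }
  lra.
Qed.

Lemma poch_pos b m : 0 < b -> 0 < poch b m.
Proof. intros Hb. induction m; simpl. lra. apply Rmult_lt_0_compat; auto. pose proof (pos_INR m); lra. Qed.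

Lemma fF_closed b m : 1 <= b -> fF b m = (-1) ^ m / (INR (fact m) * poch b m).
Proof.
  intros Hb. induction m. simpl. field.
  rewrite fF_S, IHm. change (fact (S m)) with (S m * fact m)%nat. rewrite mult_INR.
  change (poch b (S m)) with (poch b m * (b + INR m)).
  assert (0 < INR (fact m)) by (apply lt_0_INR, lt_O_fact).
  assert (0 < INR (S m)) by (apply lt_0_INR; lia).
  pose proof (poch_pos b m ltac:(lra)). assert (0 < b + INR m) by (pose proof (pos_INR m); lra).
  change ((-1) ^ S m) with (-1 * (-1) ^ m). field. repeat split; lra.
Qed.

Lemma Rpower_2m y m nu : 0 < y -> Rpower y (2 * INR m + nu) = (y ^ 2) ^ m * Rpower y nu.
Proof.
  intros Hy. rewrite Rpower_plus. f_equal. rewrite <- pow_mult.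
  rewrite <- Rpower_pow by auto. f_equal. rewrite mult_INR. simpl. ring.
Qed.

Lemma Bessel_nu k x : (1 <= k)%nat -> 0 < x ->
  BesselJ (INR k - /2) x = Rpower (x / 2) (INR k - /2) / Gamma (INR k + /2) * F0 (INR k + /2) ((x / 2) ^ 2).
Proof.
  intros Hk Hx. destruct (Gamma_facts k Hk) as [HG HGm].
  set (b := INR k + /2) in *.
  assert (Hb : 1 <= b). { unfold b. assert (1 <= INR k) by (apply (le_INR 1); auto). lra. }
  unfold BesselJ, F0, PSeries. unfold Rdiv at 1. rewrite <- Series_scal_l. apply Series_ext. intros m.
  replace (INR m + (INR k - / 2) + 1) with (INR m + b) by (unfold b; field).
  rewrite HGm, Rpower_2m by lra. rewrite fF_closed by auto.
  assert (0 < INR (fact m)) by (apply lt_0_INR, lt_O_fact).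
  pose proof (poch_pos b m ltac:(lra)).
  field. repeat split; lra.
Qed.

Lemma Bessel_nu1 k x : (1 <= k)%nat -> 0 < x ->
  BesselJ (INR k - /2 + 1) x = - (Rpower (x / 2) (INR k - /2 + 1) / Gamma (INR k + /2)) * F1 (INR k + /2) ((x / 2) ^ 2).
Proof.
  intros Hk Hx. destruct (Gamma_facts k Hk) as [HG HGm].
  set (b := INR k + /2) in *.
  assert (Hb : 1 <= b). { unfold b. assert (1 <= INR k) by (apply (le_INR 1); auto). lra. }
  unfold BesselJ, F1, PSeries. rewrite <- Series_scal_l. apply Series_ext. intros m.
  replace (INR m + (INR k - / 2 + 1) + 1) with (INR (S m) + b) by (unfold b; rewrite S_INR; field).
  rewrite HGm, Rpower_2m by lra. unfold PS_derive. rewrite fF_closed by auto.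
  change (fact (S m)) with (S m * fact m)%nat. rewrite mult_INR.
  change (poch b (S m)) with (poch b m * (b + INR m)).
  assert (0 < INR (fact m)) by (apply lt_0_INR, lt_O_fact).
  assert (0 < INR (S m)) by (apply lt_0_INR; lia).
  pose proof (poch_pos b m ltac:(lra)). assert (0 < b + INR m) by (pose proof (pos_INR m); lra).
  change ((-1) ^ S m) with (-1 * (-1) ^ m).
  field. repeat split; lra.
Qed.

Lemma unif_G b k (Hb : 1 <= b) (Sr : R) (HS : 0 <= Sr) :
  forall eps, 0 < eps -> exists N, forall n, (N <= n)%nat -> forall s, Rabs s <= Sr ->
    Rabs (PSeries (gG b k n) s - F0 b s) <= eps /\
    Rabs (PSeries (PS_derive (gG b k n)) s - F1 b s) <= eps.
Proof.
  intros eps Heps.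
  assert (Hser : forall a, CV_radius a = p_infty -> ex_series (fun m => Rabs (a m) * Sr ^ m)).
  { intros a Ha. apply (ex_series_ext (fun m => Rabs (a m * Sr ^ m))).
    intros m. rewrite Rabs_mult, (Rabs_pos_eq (Sr ^ m)); auto. apply pow_le; auto.
    apply CV_disk_inside. rewrite Ha. exact I. }
  destruct (tannery (fun n m => gG b k (n + S k) m) (fF b) (fun m => Rabs (fF b m)) Sr HS) with (eps := eps)
    as [N1 HN1]; auto.
  { intros m. apply (is_lim_seq_incr_n (fun n => gG b k n m)). apply gG_lim; auto. }
  { intros n m. apply gG_dom; auto; lia. }
  { apply Hser. apply CV_fF; auto. }
  destruct (tannery (fun n m => PS_derive (gG b k (n + S k)) m) (PS_derive (fF b)) (fun m => Rabs (PS_derive (fF b) m)) Sr HS) with (eps := eps)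
    as [N2 HN2]; auto.
  { intros m. unfold PS_derive. apply (is_lim_seq_scal_l _ (INR (S m)) (fF b (S m))).
    apply (is_lim_seq_incr_n (fun n => gG b k n (S m))). apply gG_lim; auto. }
  { intros n m. unfold PS_derive. rewrite !Rabs_mult. apply Rmult_le_compat_l. apply Rabs_pos. apply gG_dom; auto; lia. }
  { apply Hser. rewrite CV_radius_derive. apply CV_fF; auto. }
  exists (Nat.max N1 N2 + S k)%nat. intros n Hn s Hs.
  replace n with ((n - S k) + S k)%nat by lia.
  split.
  - apply HN1; auto. lia.
  - apply HN2; auto. lia.
Qed.

Lemma tau_conv b k s0 d0 : (1 <= k)%nat -> b = INR k + /2 -> 1 <= b -> 0 < s0 -> F1 b s0 = 0 ->
  (forall s, 0 <= s < s0 -> F1 b s < 0) -> 0 < d0 -> (forall s, s0 < s <= s0 + d0 -> 0 < F1 b s) ->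
  forall eps, 0 < eps -> exists N, forall n, (N <= n)%nat -> Rabs (cheb_tau n k - Rabs (F0 b s0)) < eps.
Proof.
  intros Hk Hbk Hb Hs0 Hz Hneg Hd0 Hpos eps Heps.
  destruct (cont_eps (F0 b) s0 (F0_cont b s0 Hb) (eps / 2) ltac:(lra)) as [d1 [Hd1 Hc]].
  set (dl := Rmin (d1 / 2) (Rmin d0 (Rmin (s0 / 2) 1))).
  assert (Hdl : 0 < dl) by (unfold dl; repeat apply Rmin_glb_lt; lra).
  assert (Hdl1 : dl <= d1 / 2) by apply Rmin_l.
  assert (Hdl2 : dl <= d0) by (unfold dl; eapply Rle_trans; [apply Rmin_r| apply Rmin_l]).
  assert (Hdl3 : dl <= s0 / 2) by (unfold dl; eapply Rle_trans; [apply Rmin_r| eapply Rle_trans; [apply Rmin_r| apply Rmin_l]]).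
  assert (Hdl4 : dl <= 1) by (unfold dl; eapply Rle_trans; [apply Rmin_r| eapply Rle_trans; [apply Rmin_r| apply Rmin_r]]).
  assert (Hp1 : 0 < F1 b (s0 + dl)) by (apply Hpos; lra).
  destruct (continuity_ab_maj (F1 b) 0 (s0 - dl) ltac:(lra) (fun c _ => F1_cont b c Hb)) as [Mx [HMx1 HMx2]].
  assert (Hm0 : F1 b Mx < 0) by (apply Hneg; lra).
  set (m0 := - F1 b Mx).
  set (e' := Rmin (eps / 2) (Rmin (m0 / 2) (F1 b (s0 + dl) / 2))).
  assert (He' : 0 < e') by (unfold e', m0; repeat apply Rmin_glb_lt; lra).
  assert (He1 : e' <= eps / 2) by apply Rmin_l.
  assert (He2 : e' <= m0 / 2) by (unfold e'; eapply Rle_trans; [apply Rmin_r| apply Rmin_l]).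
  assert (He3 : e' <= F1 b (s0 + dl) / 2) by (unfold e'; eapply Rle_trans; [apply Rmin_r| apply Rmin_r]).
  destruct (unif_G b k Hb (s0 + 1) ltac:(lra) e' He') as [N1 HN1].
  exists (Nat.max N1 (S k)). intros n Hn.
  assert (Hkn : (k < n)%nat) by lia.
  assert (HN : 0 < INR n) by (apply lt_0_INR; lia).
  specialize (HN1 n ltac:(lia)).
  set (Gd := fun s => PSeries (PS_derive (gG b k n)) s).
  set (G0 := fun s => PSeries (gG b k n) s).
  assert (HGdc : continuity Gd).
  { intros x. apply PSeries_continuity. rewrite CV_dgG by lia. exact I. }
  assert (Hlow : forall s, s <= s0 - dl -> Gd s < 0).
  { intros s Hs. destruct (Rle_lt_dec s 0).
    - apply dG_neg with (k := k); auto.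
    - destruct (HN1 s ltac:(apply Rabs_le; lra)) as [_ H2].
      apply Rabs_def2b in H2. specialize (HMx1 s ltac:(lra)). unfold Gd, m0 in *. lra. }
  assert (Hhigh : 0 < Gd (s0 + dl)).
  { destruct (HN1 (s0 + dl) ltac:(apply Rabs_le; lra)) as [_ H2]. apply Rabs_def2b in H2. unfold Gd. lra. }
  destruct (IVT Gd (s0 - dl) (s0 + dl) HGdc ltac:(lra) (Hlow _ (Rle_refl _)) Hhigh) as [z [Hz1 Hz2]].
  assert (HT := Tk_pos k n ltac:(lia) ltac:(lia)).
  set (Z := fun x => Derive_n (ChebT n) (S k) x = 0).
  assert (HZ : forall x, Z x <-> Gd (sOf n x) = 0).
  { intros x. unfold Z. rewrite (ChebT_DSk b k n x) by (auto; lia). fold (Gd (sOf n x)).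
    split; intros H.
    - assert (Hne : Tk k n * (- (INR n * INR n) / 2) <> 0).
      { apply Rmult_integral_contrapositive. split. lra. assert (0 < INR n * INR n) by nra. intro; lra. }
      apply Rmult_integral in H. destruct H; [contradiction| auto].
    - rewrite H. ring. }
  set (xz := 1 - 2 * z / (INR n * INR n)).
  assert (Hsz : sOf n xz = z) by (unfold sOf, xz; field; lra).
  assert (HZz : Z xz) by (apply HZ; rewrite Hsz; auto).
  set (xb := 1 - 2 * (s0 - dl) / (INR n * INR n)).
  assert (Hub : forall x, Z x -> x <= xb).
  { intros x Hx. apply HZ in Hx. destruct (Rle_lt_dec x xb) as [|Hlt]; auto. exfalso.
    assert (sOf n x < s0 - dl).
    { unfold sOf. unfold xb in Hlt. assert (0 < INR n * INR n) by nra.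
      apply Rmult_lt_reg_r with (2 / (INR n * INR n)). apply Rdiv_lt_0_compat; lra.
      replace ((1 - x) * (INR n * INR n) / 2 * (2 / (INR n * INR n))) with (1 - x) by (field; lra).
      replace ((s0 - dl) * (2 / (INR n * INR n))) with (2 * (s0 - dl) / (INR n * INR n)) by (field; lra).
      lra. }
    pose proof (Hlow (sOf n x) ltac:(lra)). lra. }
  destruct (Lub_Rbar_correct Z) as [HL1 HL2].
  assert (HLz := HL1 xz HZz).
  assert (HLb := HL2 xb Hub).
  unfold cheb_tau, cheb_omega. fold Z.
  destruct (Lub_Rbar Z) as [w| |] eqn:HLw; simpl in HLz, HLb; try contradiction.
  simpl real.
  rewrite !(ChebT_Dk b k n) by (auto; lia). fold (G0 (sOf n w)). fold (G0 (sOf n 1)).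
  assert (Hs1 : sOf n 1 = 0) by (unfold sOf; field).
  rewrite Hs1. unfold G0 at 2. rewrite PSeries_0. simpl gG.
  rewrite Rmult_1_r, Rabs_mult, (Rabs_pos_eq (Tk k n)) by lra.
  replace (Tk k n * Rabs (G0 (sOf n w)) / Tk k n) with (Rabs (G0 (sOf n w))) by (field; lra).
  set (sw := sOf n w).
  assert (Hsw : s0 - dl <= sw <= s0 + dl).
  { assert (0 < INR n * INR n) by nra. unfold sw, sOf. split.
    - apply Rmult_le_reg_r with (2 / (INR n * INR n)). apply Rdiv_lt_0_compat; lra.
      replace ((1 - w) * (INR n * INR n) / 2 * (2 / (INR n * INR n))) with (1 - w) by (field; lra).
      replace ((s0 - dl) * (2 / (INR n * INR n))) with (2 * (s0 - dl) / (INR n * INR n)) by (field; lra).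
      unfold xb in HLb. lra.
    - apply Rle_trans with z; [|lra]. rewrite <- Hsz. unfold sOf.
      apply Rmult_le_compat_r. lra. apply Rmult_le_compat_r. lra. lra. }
  destruct (HN1 sw ltac:(apply Rabs_le; lra)) as [H1 _].
  assert (Hcw : Rabs (F0 b sw - F0 b s0) < eps / 2) by (apply Hc; apply Rabs_def1; lra).
  pose proof (Rabs_triang_inv2 (G0 sw) (F0 b s0)).
  assert (Rabs (G0 sw - F0 b s0) < eps).
  { replace (G0 sw - F0 b s0) with ((G0 sw - F0 b sw) + (F0 b sw - F0 b s0)) by ring.
    eapply Rle_lt_trans. apply Rabs_triang. unfold G0 in *. lra. }
  lra.
Qed.

Theorem lemma6p1 (k : nat) (hk : (1 <= k)%nat) :
  let nu := INR k - / 2 in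
  exists j : R,
    first_pos_zero (BesselJ (nu + 1)) j /\
    is_lim_seq (fun n => cheb_tau n k)
      (Finite (Gamma (nu + 1) * Rpower (j / 2) (- nu) * Rabs (BesselJ nu j))).
Proof.
  intros nu.
  set (b := INR k + /2).
  assert (Hbk : b = INR k + /2) by reflexivity.
  assert (Hb : 1 <= b). { unfold b. assert (1 <= INR k) by (apply (le_INR 1); auto). lra. }
  destruct (first_zero b k Hb Hbk) as [s0 [Hs0 [Hz Hneg]]].
  assert (HF0 := F0_at_first_zero b k s0 Hb Hbk Hs0 Hz Hneg).
  destruct (F1_pos_after b k s0 Hb Hbk Hs0 Hz HF0) as [d0 [Hd0 Hpos]].
  destruct (Gamma_facts k hk) as [HG _]. fold b in HG.
  assert (Hsq : 0 < sqrt s0) by (apply sqrt_lt_R0; auto).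
  exists (2 * sqrt s0).
  assert (Hj2 : 2 * sqrt s0 / 2 = sqrt s0) by field.
  assert (Hjs : (2 * sqrt s0 / 2) ^ 2 = s0) by (rewrite Hj2; apply pow2_sqrt; lra).
  split.
  - split; [lra|split].
    + unfold nu. rewrite Bessel_nu1 by (auto; lra). fold b. rewrite Hjs, Hz. ring.
    + intros x Hx. unfold nu. rewrite Bessel_nu1 by (auto; lra). fold b.
      assert (Hx2 : 0 <= (x / 2) ^ 2 < s0).
      { split. apply pow2_ge_0. rewrite <- (pow2_sqrt s0) by lra.
        assert (0 <= x / 2 < sqrt s0) by lra. simpl. nra. }
      pose proof (Hneg _ Hx2).
      assert (0 < Rpower (x / 2) (INR k - / 2 + 1)) by (unfold Rpower; apply exp_pos).
      assert (0 < Rpower (x / 2) (INR k - / 2 + 1) / Gamma b) by (apply Rdiv_lt_0_compat; auto).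
      intro Hc. nra.
  - replace (nu + 1) with b by (unfold nu, b; field).
    unfold nu. rewrite Bessel_nu by (auto; lra). fold b. rewrite Hjs.
    replace (Gamma b * Rpower (2 * sqrt s0 / 2) (- (INR k - / 2)) *
      Rabs (Rpower (2 * sqrt s0 / 2) (INR k - / 2) / Gamma b * F0 b s0)) with (Rabs (F0 b s0)).
    2: { rewrite Rabs_mult. rewrite (Rabs_pos_eq (Rpower _ _ / _)).
         2: { left. apply Rdiv_lt_0_compat; auto. unfold Rpower; apply exp_pos. }
         rewrite Rpower_Ropp. assert (0 < Rpower (2 * sqrt s0 / 2) (INR k - / 2)) by (unfold Rpower; apply exp_pos).
         field. split; lra. }
    apply is_lim_seq_spec. intros eps.
    destruct (tau_conv b k s0 d0 hk Hbk Hb Hs0 Hz Hneg Hd0 Hpos eps (cond_pos eps)) as [N HN].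
    exists N. intros n Hn. apply HN; auto.
Qed.
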